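(* Let $\gamma$ be a regular periodic orbit of the regularized planar two-center problem, lying on a regular torus $\mathbb{T}$ with rotation number $W$; write $W=p/q$ with $p,q$ coprime positive integers. Then the periodic syzygy sequence of $\gamma$ is of the following form, according to the type of $\mathbb{T}$: (L) $1\,3^{n_1}\,2\,3^{n_2}\,1\,3^{n_3}\,2\cdots 3^{n_s}$ (the symbols 1 and 2 alternate, separated by blocks of 3's); (S) $1\,3^{n_1}\,1\,3^{n_2}\,1\,3^{n_3}\,1\cdots 3^{n_s}$ or $2\,3^{n_1}\,2\,3^{n_2}\,2\,3^{n_3}\cdots 2\,3^{n_s}$; (P) $(12)^q$; where in cases L and S the exponents $n_i$ are those of the Sturmian word of the rational number $W$. In the cases L and S the length of the syzygy word recorded over one period of $\gamma$ on $\mathbb{T}$ is $2(p+q)$.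
   Context: Fix $d>0$ and masses $m_1,m_2>0$ at the points $(-d,0)$ and $(d,0)$ of the plane. A test particle moves with Hamiltonian $H=\tfrac12(p_x^2+p_y^2)-m_1/\sqrt{(x+d)^2+y^2}-m_2/\sqrt{(x-d)^2+y^2}$; only energies $h<0$ are considered. Regularization: introduce $(\lambda,\nu)\in\mathbb{R}\times(\mathbb{R}/2\pi\mathbb{Z})$ by $x+iy=d\sin(\nu+i\lambda)$, i.e. $(x,y)=(d\cosh\lambda\sin\nu,\ d\sinh\lambda\cos\nu)$ (a double cover of the plane branched over the two centers, which correspond to $(\lambda,\nu)=(0,\pm\pi/2)$), with conjugate momenta $p_\lambda,p_\nu$, and the time change $dt=d^2(\cosh^2\lambda-\sin^2\nu)\,d\tau$. On the energy level $H=h$ the motion becomes (in time $\tau$) the flow of $H_\lambda(\lambda,p_\lambda)+H_\nu(\nu,p_\nu)$ on its zero level, where $H_\lambda=\tfrac12p_\lambda^2-d(m_1+m_2)\cosh\lambda-hd^2\cosh^2\lambda$ and $H_\nu=\tfrac12p_\nu^2+d(m_1-m_2)\sin\nu+hd^2\sin^2\nu$; each orbit lies in a set $\{H_\lambda=-g,\ H_\nu=g\}$, $g$ being a separation constant (the value of Euler's second integral). Regular torus: a compact connected component $\mathbb{T}=C_\lambda\times C_\nu$ of such a set, where $-g$ is a regular value of $H_\lambda$ and $g$ a regular value of $H_\nu$; here $C_\lambda$ is a closed curve in the $(\lambda,p_\lambda)$-plane and $C_\nu$ a closed curve in the cylinder $(\nu,p_\nu)\in(\mathbb{R}/2\pi\mathbb{Z})\times\mathbb{R}$.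 Every regular torus is of one of three types: S (satellite) if $C_\nu$ is contractible in the cylinder; L (lemniscate) if $C_\nu$ winds around the cylinder and $C_\lambda$ meets $\{\lambda=0\}$; P (planetary) if $C_\nu$ winds around the cylinder and $C_\lambda$ does not meet $\{\lambda=0\}$. Rotation number: if $T_\lambda,T_\nu$ are the $\tau$-periods of the one-degree-of-freedom motions on $C_\lambda$ and $C_\nu$, then $W=T_\nu/T_\lambda>0$. With angles $\theta_1\in\mathbb{R}/\mathbb{Z}$ along $C_\nu$ and $\theta_2\in\mathbb{R}/\mathbb{Z}$ along $C_\lambda$, each increasing uniformly in $\tau$ with period 1, the flow on $\mathbb{T}$ is linear with lifts $\theta_2=W\theta_1+\mathrm{const}$. Syzygies: the particle is on the $x$-axis iff $\lambda=0$ or $\nu\equiv\pm\pi/2$. Record symbol 3 when $\lambda=0$, $\nu\not\equiv\pm\pi/2$ (particle strictly between the centers), symbol 1 when $\nu\equiv-\pi/2$, $\lambda\neq0$ (particle on $x<-d$), symbol 2 when $\nu\equiv\pi/2$, $\lambda\ne0$ (particle on $x>d$). Collision points are those with $\lambda=0$, $\nu\equiv\pm\pi/2$. A regular periodic orbit is a periodic orbit of the regularized flow on a regular torus that contains no collision point; its periodic syzygy sequence is the cyclic word of symbols recorded in time order over one period. Sturmian word: for $m>0$ and $y_0$ with the line $y=mx+y_0$ avoiding $\mathbb{Z}^2$, put $y_k=y_0+km$ and $n_k=\lfloor m\rfloor$ if $\{y_{k-1}\}+\{m\}<1$, $n_k=\lfloor m\rfloor+1$ if $\{y_{k-1}\}+\{m\}>1$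 ($\lfloor\cdot\rfloor$ floor, $\{\cdot\}$ fractional part). For rational $m$ the resulting periodic sequence $(n_k)$, up to index shift, does not depend on $y_0$; it is the Sturmian word of $m$. *)

(* Defs.v *)
From Stdlib Require Import Reals Lra List ZArith Arith.
Open Scope R_scope.

Definition H_lam (d m1 m2 h : R) (l p : R) : R :=
  p ^ 2 / 2 - d * (m1 + m2) * cosh l - h * d ^ 2 * (cosh l) ^ 2.

Definition dH_lam (d m1 m2 h : R) (l : R) : R :=
  - d * (m1 + m2) * sinh l - 2 * h * d ^ 2 * cosh l * sinh l.

Definition H_nu (d m1 m2 h : R) (n p : R) : R :=
  p ^ 2 / 2 + d * (m1 - m2) * sin n + h * d ^ 2 * (sin n) ^ 2.

Definition dH_nu (d m1 m2 h : R) (n : R) : R :=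
  d * (m1 - m2) * cos n + 2 * h * d ^ 2 * sin n * cos n.

(** [c] is a regular value of a one-degree-of-freedom Hamiltonian
    H(x,p) = p^2/2 + V(x) with dH/dx = dHx : the gradient (dHx x, p)
    does not vanish at any point of the level set {H = c}. *)
Definition regular_value (H : R -> R -> R) (dHx : R -> R) (c : R) : Prop :=
  forall x p, H x p = c -> dHx x <> 0 \/ p <> 0.

(** A solution of the regularized flow (in time tau) of H_lambda + H_nu,
    with nu lifted continuously to R (nu is an angle mod 2 pi). *)
Definition is_reg_solution (d m1 m2 h : R)
    (lam plam nu pnu : R -> R) : Prop :=
  forall tau,
    derivable_pt_lim lam tau (plam tau) /\
    derivable_pt_lim plam tau (- dH_lam d m1 m2 h (lam tau)) /\
    derivable_pt_lim nu tau (pnu tau) /\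
    derivable_pt_lim pnu tau (- dH_nu d m1 m2 h (nu tau)).

Definition eqmod2pi (a b : R) : Prop := exists k : Z, a = b + 2 * PI * IZR k.

Definition min_period (per : R -> Prop) (T : R) : Prop :=
  0 < T /\ per T /\ forall T', 0 < T' < T -> ~ per T'.

Definition state_per (lam plam nu pnu : R -> R) (T : R) : Prop :=
  forall tau, lam (tau + T) = lam tau /\ plam (tau + T) = plam tau /\
              eqmod2pi (nu (tau + T)) (nu tau) /\ pnu (tau + T) = pnu tau.

Definition lam_per (lam plam : R -> R) (T : R) : Prop :=
  forall tau, lam (tau + T) = lam tau /\ plam (tau + T) = plam tau.

Definition nu_per (nu pnu : R -> R) (T : R) : Prop :=
  forall tau, eqmod2pi (nu (tau + T)) (nu tau) /\ pnu (tau + T) = pnu tau.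

(** Types of the torus.  C_nu is traced once by nu over one period Tnu;
    its winding number around the cylinder is (nu(Tnu) - nu(0)) / (2 pi).
    C_nu is contractible iff this winding number is 0. *)
Definition type_S (nu : R -> R) (Tnu : R) : Prop := nu Tnu = nu 0.
Definition type_L (lam nu : R -> R) (Tnu : R) : Prop :=
  nu Tnu <> nu 0 /\ exists tau, lam tau = 0.
Definition type_P (lam nu : R -> R) (Tnu : R) : Prop :=
  nu Tnu <> nu 0 /\ forall tau, lam tau <> 0.

(** collision: lambda = 0 and nu = +-pi/2 mod 2pi (i.e. cos nu = 0) *)
Definition collision_free (lam nu : R -> R) : Prop :=
  forall tau, ~ (lam tau = 0 /\ cos (nu tau) = 0).

(** Syzygies: the particle is on the x-axis iff lambda = 0 or nu = +-pi/2. *)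
Definition is_syzygy (lam nu : R -> R) (tau : R) : Prop :=
  lam tau = 0 \/ cos (nu tau) = 0.

Definition syz_symbol (lam nu : R -> R) (tau : R) (s : nat) : Prop :=
  (s = 3%nat /\ lam tau = 0 /\ cos (nu tau) <> 0) \/
  (s = 1%nat /\ sin (nu tau) = -1 /\ lam tau <> 0) \/
  (s = 2%nat /\ sin (nu tau) = 1 /\ lam tau <> 0).

Definition syzygy_word (lam nu : R -> R) (T : R) (w : list nat) : Prop :=
  exists ts : list R,
    length ts = length w /\
    (forall i, (S i < length ts)%nat -> nth i ts 0 < nth (S i) ts 0) /\
    (forall tau, In tau ts -> 0 <= tau < T) /\
    (forall tau, 0 <= tau < T -> is_syzygy lam nu tau -> In tau ts) /\
    (forall i, (i < length w)%nat -> syz_symbol lam nu (nth i ts 0) (nth i w 0%nat)).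

Definition rotate {A : Type} (k : nat) (w : list A) : list A :=
  skipn k w ++ firstn k w.

Definition block (a n : nat) : list nat := a :: repeat 3%nat n.

Definition L_word (ns : list nat) : list nat :=
  concat (map (fun i => block (if Nat.even i then 1%nat else 2%nat) (nth i ns 0%nat))
              (seq 0 (length ns))).

Definition S_word (a : nat) (ns : list nat) : list nat := concat (map (block a) ns).

Definition P_word (q : nat) : list nat := concat (repeat (1%nat :: 2%nat :: nil) q).

(** Sturmian word of slope m (floor = Int_part, fractional part = frac_part):
    ns = (n_1, ..., n_s) consists of consecutive terms of the Sturmian
    sequence of the line y = m x + y0 for some y0 with the line avoiding Z^2
    (the choice of y0 also accounts for an arbitrary index shift). *)
Definition sturmian_exponents (m : R) (ns : list nat) : Prop :=
  exists y0 : R,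
    (forall x y : Z, m * IZR x + y0 <> IZR y) /\
    forall i, (i < length ns)%nat ->
      let yprev := y0 + INR i * m in
      (frac_part yprev + frac_part m < 1 /\
         Z.of_nat (nth i ns 0%nat) = Int_part m) \/
      (frac_part yprev + frac_part m > 1 /\
         Z.of_nat (nth i ns 0%nat) = (Int_part m + 1)%Z).

(* Main.v *)
Require Import Defs.
From Stdlib Require Import Reals Lra Lia List ZArith Arith Sorting.
Open Scope R_scope.

Notation dl := derivable_pt_lim.

Lemma dl_ext f g x l : (forall t, f t = g t) -> dl f x l -> dl g x l.
Proof.
  intros E H eps He. destruct (H eps He) as [d Hd]. exists d.
  intros h H1 H2. rewrite <- !E. now apply Hd.
Qed.

Lemma dl_eqv f x a b : dl f x a -> a = b -> dl f x b.
Proof. intros H ->; exact H. Qed.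

Lemma dl_mult' f g x a b : dl f x a -> dl g x b -> dl (fun t => f t * g t) x (a * g x + f x * b).
Proof. intros; exact (derivable_pt_lim_mult f g x a b H H0). Qed.
Lemma dl_plus' f g x a b : dl f x a -> dl g x b -> dl (fun t => f t + g t) x (a + b).
Proof. intros; exact (derivable_pt_lim_plus f g x a b H H0). Qed.
Lemma dl_minus' f g x a b : dl f x a -> dl g x b -> dl (fun t => f t - g t) x (a - b).
Proof. intros; exact (derivable_pt_lim_minus f g x a b H H0). Qed.
Lemma dl_opp' f x a : dl f x a -> dl (fun t => - f t) x (- a).
Proof. intros; exact (derivable_pt_lim_opp f x a H). Qed.
Lemma dl_const' c x : dl (fun _ => c) x 0.
Proof. exact (derivable_pt_lim_const c x). Qed.
Lemma dl_id' x : dl (fun t => t) x 1.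
Proof. exact (derivable_pt_lim_id x). Qed.
Lemma dl_comp' f g x a b : dl f x a -> dl g (f x) b -> dl (fun t => g (f t)) x (b * a).
Proof. intros; exact (derivable_pt_lim_comp f g x a b H H0). Qed.
Lemma dl_scal c f x a : dl f x a -> dl (fun t => c * f t) x (c * a).
Proof. intros H. apply dl_eqv with (0 * f x + c * a); [|ring].
  exact (dl_mult' (fun _ => c) f x 0 a (dl_const' c x) H). Qed.

Lemma dl_shift f x a c : dl f (x + c) a -> dl (fun t => f (t + c)) x a.
Proof.
  intros H. apply dl_eqv with (a * 1).
  - apply (dl_comp' (fun t => t + c) f x 1 a).
    + apply dl_eqv with (1 + 0). apply dl_plus'. apply dl_id'. apply dl_const'. lra.
    + exact H.
  - lra.
Qed.
Lemma dl_refl f x a c : dl f (c - x) a -> dl (fun t => f (c - t)) x (- a).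
Proof.
  intros H. apply dl_eqv with (a * (0 - 1)).
  - apply (dl_comp' (fun t => c - t) f x (0-1) a).
    + apply dl_minus'. apply dl_const'. apply dl_id'.
    + exact H.
  - lra.
Qed.

Lemma dl_cont f x a : dl f x a -> continuity_pt f x.
Proof. intros H. apply derivable_continuous_pt. exists a. exact H. Qed.

Lemma nonincr f f' : (forall t, dl f t (f' t)) -> (forall t, f' t <= 0) ->
  forall a b, a <= b -> f b <= f a.
Proof.
  intros Hd Hs a b Hab. destruct (Rle_lt_or_eq_dec _ _ Hab) as [H|H].
  - destruct (MVT_cor2 f f' a b H (fun c _ => Hd c)) as [c [E _]].
    specialize (Hs c). nra.
  - subst; lra.
Qed.

Lemma const_deriv0 f : (forall t, dl f t 0) -> forall a b, f a = f b.
Proof.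
  intros Hd a b.
  assert (H1 := nonincr f (fun _ => 0) Hd (fun _ => Rle_refl 0)).
  assert (H2 := nonincr (fun t => - f t) (fun _ => - 0) (fun t => dl_opp' _ _ _ (Hd t)) (fun _ => ltac:(lra))).
  destruct (Rle_dec a b).
  - specialize (H1 a b r); specialize (H2 a b r); simpl in *; lra.
  - assert (b <= a) by lra. specialize (H1 b a H); specialize (H2 b a H); simpl in *; lra.
Qed.

Lemma sign_near f t P : dl f t P -> f t = 0 -> P <> 0 ->
  exists eps, 0 < eps /\ forall h, 0 < h < eps -> f (t + h) * P > 0 /\ f (t - h) * P < 0.
Proof.
  intros H Ht HP.
  assert (Ha : 0 < Rabs P / 2) by (apply Rabs_pos_lt in HP; lra).
  destruct (H _ Ha) as [d Hd]. exists d. split; [apply cond_pos|].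
  intros h [h0 h1]. split.
  - assert (A := Hd h ltac:(lra) ltac:(rewrite Rabs_right; lra)).
    rewrite Ht, Rminus_0_r in A.
    assert (B : f (t + h) / h * P > 0).
    { destruct (Rlt_dec 0 P).
      - rewrite (Rabs_right P) in A by lra. apply Rabs_def2 in A. nra.
      - assert (P < 0) by (destruct (Rtotal_order P 0) as [?|[?|?]]; auto; contradiction).
        rewrite (Rabs_left P) in A by lra. apply Rabs_def2 in A. nra. }
    assert (f (t+h) / h * P = (f (t + h) * P) * / h) by (field; lra).
    rewrite H0 in B. assert (0 < / h) by (apply Rinv_0_lt_compat; lra). nra.
  - assert (A := Hd (- h) ltac:(lra) ltac:(rewrite Rabs_left; lra)).
    rewrite Ht, Rminus_0_r in A. replace (t + - h) with (t - h) in A by lra.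
    assert (B : f (t - h) / (- h) * P > 0).
    { destruct (Rlt_dec 0 P).
      - rewrite (Rabs_right P) in A by lra. apply Rabs_def2 in A. nra.
      - assert (P < 0) by (destruct (Rtotal_order P 0) as [?|[?|?]]; auto; contradiction).
        rewrite (Rabs_left P) in A by lra. apply Rabs_def2 in A. nra. }
    assert (f (t-h) / (-h) * P = - ((f (t - h) * P) * / h)) by (field; lra).
    rewrite H0 in B. assert (0 < / h) by (apply Rinv_0_lt_compat; lra). nra.
Qed.

Lemma ivt0 f a b : (forall t, continuity_pt f t) -> a < b -> f a * f b < 0 ->
  exists c, a < c < b /\ f c = 0.
Proof.
  intros Hc Hab Hs.
  assert (Hcf : continuity f) by exact Hc.
  destruct (Rlt_dec (f a) 0).
  - assert (0 < f b) by nra.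
    destruct (IVT f a b Hcf Hab r H) as [c [[H1 H2] H3]].
    exists c. split; [split|]; auto.
    + destruct H1; auto. subst; lra.
    + destruct H2; auto. subst; lra.
  - apply Rnot_lt_le in n.
    assert (0 < f a). { destruct n as [n|n]; auto. rewrite <- n in Hs. lra. }
    assert (f b < 0) by nra.
    assert (Hc' : continuity (fun t => - f t)).
    { intro t. apply (continuity_pt_opp f t (Hc t)). }
    destruct (IVT (fun t => - f t) a b Hc' Hab ltac:(lra) ltac:(lra)) as [c [[H1 H2] H3]].
    exists c. split; [split|]; try lra.
    + destruct H1; auto. subst; lra.
    + destruct H2; auto. subst; lra.
Qed.

Lemma ivt_val f a b y : (forall t, continuity_pt f t) -> a <= b ->
  Rmin (f a) (f b) <= y <= Rmax (f a) (f b) -> exists c, a <= c <= b /\ f c = y.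
Proof.
  intros Hc Hab Hy.
  destruct (Req_dec (f a) y) as [E|E]; [exists a; split; [lra|auto]|].
  destruct (Req_dec (f b) y) as [E'|E']; [exists b; split; [lra|auto]|].
  destruct (Rle_lt_or_eq_dec _ _ Hab) as [Hlt|Heq]; [|subst; unfold Rmin, Rmax in Hy; destruct Rle_dec; lra].
  destruct (ivt0 (fun t => f t - y) a b) as [c [Hc1 Hc2]]; auto.
  - intro t. apply continuity_pt_minus; auto. apply continuity_pt_const. intros u v; auto.
  - unfold Rmin, Rmax in Hy; destruct (Rle_dec (f a) (f b)).
    + assert (f a < y) by lra. assert (y < f b) by lra. nra.
    + assert (f b < y) by lra. assert (y < f a) by lra. nra.
  - exists c; split; lra.
Qed.

Lemma first_zero f a b : (forall t, continuity_pt f t) -> a < b -> f a <> 0 -> f b = 0 ->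
  exists t, a < t <= b /\ f t = 0 /\ forall s, a <= s < t -> f s <> 0.
Proof.
  intros Hc Hab Ha Hb.
  set (E := fun s => a <= s <= b /\ f s = 0).
  assert (Hbd : bound (fun s => E (- s))).
  { exists (- a). intros s [H1 H2]. lra. }
  assert (Hne : exists s, E (- s)). { exists (- b). unfold E. rewrite Ropp_involutive. split; [lra|auto]. }
  destruct (completeness _ Hbd Hne) as [m [Hub Hlub]].
  set (t := - m).
  assert (Ht1 : a <= t <= b).
  { split.
    - unfold t. assert (m <= - a). { apply Hlub. intros s [H1 H2]. lra. } lra.
    - unfold t. assert (- b <= m). { apply Hub. unfold E. rewrite Ropp_involutive. split; [lra|auto]. } lra. }
  assert (Hft : f t = 0).
  { destruct (Req_dec (f t) 0) as [|Hn]; auto. exfalso.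
    assert (Hp : 0 < Rabs (f t)) by (apply Rabs_pos_lt; auto).
    destruct (Hc t (Rabs (f t)) Hp) as [d [Hd Hd2]].
    assert (Hex : exists s, E (- s) /\ m - d < s).
    { destruct (Classical_Prop.classic (exists s, E (- s) /\ m - d < s)) as [H|H]; auto.
      exfalso. assert (m <= m - d). { apply Hlub. intros s Hs. destruct (Rle_dec s (m - d)); auto.
        exfalso. apply H. exists s. split; auto; lra. } lra. }
    destruct Hex as [s [[Hs1 Hs2] Hs3]].
    assert (s <= m) by (apply Hub; split; auto).
    destruct (Req_dec (-s) t) as [Heq|Hneq].
    - rewrite Heq in Hs2. contradiction.
    - assert (Hd3 := Hd2 (- s)). unfold dist in Hd3; simpl in Hd3; unfold R_dist in Hd3.
      assert (Rabs (f (-s) - f t) < Rabs (f t)).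
      { apply Hd3. split. unfold D_x, no_cond. split; auto. rewrite Rabs_right; unfold t in *; lra. }
      rewrite Hs2 in H0. rewrite Rminus_0_l, Rabs_Ropp in H0. lra. }
  exists t. split; [split|split]; auto; try lra.
  - destruct (Req_dec a t); [subst t; rewrite <- H in Hft; contradiction|lra].
  - intros s [Hs1 Hs2] Hfs. assert (- s <= m). { apply Hub. unfold E. rewrite Ropp_involutive. split; [lra|auto]. }
    unfold t in Hs2. lra.
Qed.

Lemma lip_mvt (F F' : R -> R) (S : R -> Prop) K :
  (forall x, dl F x (F' x)) ->
  (forall a b c, S a -> S b -> Rmin a b <= c <= Rmax a b -> Rabs (F' c) <= K) ->
  forall a b, S a -> S b -> Rabs (F a - F b) <= K * Rabs (a - b).
Proof.
  intros Hd Hb a b Ha Hb'.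
  destruct (Rtotal_order a b) as [H|[H|H]].
  - destruct (MVT_cor2 F F' a b H (fun c _ => Hd c)) as [c [E Hc]].
    assert (Hk := Hb a b c Ha Hb' ltac:(unfold Rmin, Rmax; destruct Rle_dec; lra)).
    replace (F a - F b) with (- (F b - F a)) by ring. rewrite Rabs_Ropp, E, Rabs_mult.
    replace (Rabs (a - b)) with (Rabs (b - a)) by (rewrite <- Rabs_Ropp; f_equal; ring).
    apply Rmult_le_compat_r; [apply Rabs_pos|auto].
  - subst. rewrite !Rminus_diag, Rabs_R0. lra.
  - destruct (MVT_cor2 F F' b a H (fun c _ => Hd c)) as [c [E Hc]].
    assert (Hk := Hb a b c Ha Hb' ltac:(unfold Rmin, Rmax; destruct Rle_dec; lra)).
    rewrite E, Rabs_mult. apply Rmult_le_compat_r; [apply Rabs_pos|auto].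
Qed.

Lemma abs_le_inv x a : Rabs x <= a -> - a <= x <= a.
Proof. intros H. pose proof (Rle_abs x). pose proof (Rle_abs (-x)). rewrite Rabs_Ropp in H1. lra. Qed.

Lemma sq0 a b : a * a + b * b = 0 -> a = 0 /\ b = 0.
Proof. intros H. pose proof (Rle_0_sqr a). pose proof (Rle_0_sqr b). unfold Rsqr in *. split; nra. Qed.

Lemma two_ab u v : 2 * Rabs u * Rabs v <= u * u + v * v.
Proof.
  assert (Rabs u * Rabs u = u * u) by (rewrite <- Rabs_mult; apply Rabs_right; apply Rle_ge, Rle_0_sqr).
  assert (Rabs v * Rabs v = v * v) by (rewrite <- Rabs_mult; apply Rabs_right; apply Rle_ge, Rle_0_sqr).
  assert (0 <= (Rabs u - Rabs v) * (Rabs u - Rabs v)) by apply Rle_0_sqr. nra.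
Qed.

Lemma uniq2 (F : R -> R) (S : R -> Prop) K : 0 <= K ->
  (forall a b, S a -> S b -> Rabs (F a - F b) <= K * Rabs (a - b)) ->
  forall x1 p1 x2 p2 t0, (forall t, S (x1 t)) -> (forall t, S (x2 t)) ->
  (forall t, dl x1 t (p1 t) /\ dl p1 t (F (x1 t))) ->
  (forall t, dl x2 t (p2 t) /\ dl p2 t (F (x2 t))) ->
  x1 t0 = x2 t0 -> p1 t0 = p2 t0 -> forall t, x1 t = x2 t /\ p1 t = p2 t.
Proof.
  intros HK HL x1 p1 x2 p2 t0 S1 S2 D1 D2 E1 E2.
  set (L := 1 + K).
  set (E := fun t => (x1 t - x2 t) * (x1 t - x2 t) + (p1 t - p2 t) * (p1 t - p2 t)).
  set (E' := fun t => 2 * (x1 t - x2 t) * (p1 t - p2 t) + 2 * (p1 t - p2 t) * (F (x1 t) - F (x2 t))).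
  assert (dE : forall t, dl E t (E' t)).
  { intro t. destruct (D1 t) as [a1 b1]; destruct (D2 t) as [a2 b2].
    assert (dx := dl_minus' _ _ _ _ _ a1 a2). assert (dp := dl_minus' _ _ _ _ _ b1 b2).
    eapply dl_eqv. apply dl_plus'; apply dl_mult'; eassumption.
    unfold E'; ring. }
  assert (bE : forall t, Rabs (E' t) <= L * E t).
  { intro t. unfold E', E, L.
    assert (HF := HL _ _ (S1 t) (S2 t)).
    set (u := x1 t - x2 t) in *. set (v := p1 t - p2 t) in *. set (w := F (x1 t) - F (x2 t)) in *. clearbody u v w.
    assert (Rabs (2 * u * v + 2 * v * w) <= 2 * Rabs u * Rabs v + 2 * Rabs v * Rabs w).
    { eapply Rle_trans. apply Rabs_triang. rewrite !Rabs_mult. rewrite (Rabs_right 2) by lra. lra. }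
    assert (Rabs v * Rabs w <= Rabs v * (K * Rabs u)) by (apply Rmult_le_compat_l; [apply Rabs_pos|auto]).
    assert (2 * Rabs u * Rabs v <= u * u + v * v).
    { apply two_ab. }
    assert (0 <= Rabs u) by apply Rabs_pos. assert (0 <= Rabs v) by apply Rabs_pos.
    assert (K * (2 * Rabs u * Rabs v) <= K * (u * u + v * v)) by (apply Rmult_le_compat_l; auto).
    nra. }
  assert (Epos : forall t, 0 <= E t) by (intro t; unfold E; apply Rplus_le_le_0_compat; apply Rle_0_sqr).
  assert (E0 : E t0 = 0) by (unfold E; rewrite E1, E2; ring).
  assert (Ezero : forall t, E t = 0).
  { intro t. destruct (Rle_dec t0 t).
    - set (G := fun s => E s * exp (- L * (s - t0))).
      assert (dG : forall s, dl G s ((E' s - L * E s) * exp (- L * (s - t0)))).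
      { intro s. eapply dl_eqv. apply dl_mult'. apply dE.
        apply (dl_comp' (fun s => - L * (s - t0)) exp).
        apply dl_scal. apply dl_minus'. apply dl_id'. apply dl_const'.
        apply derivable_pt_lim_exp. simpl. ring. }
      assert (HG := nonincr G _ dG).
      assert (Hle : G t <= G t0).
      { apply HG; auto. intro s. assert (0 < exp (- L * (s - t0))) by apply exp_pos.
        assert (E' s <= L * E s) by (specialize (bE s); apply abs_le_inv in bE; lra). nra. }
      unfold G in Hle. rewrite E0 in Hle.
      assert (0 < exp (- L * (t - t0))) by apply exp_pos. specialize (Epos t). nra.
    - set (G := fun s => - (E s * exp (L * (s - t0)))).
      assert (dG : forall s, dl G s (- ((E' s + L * E s) * exp (L * (s - t0))))).
      { intro s. apply dl_opp'. eapply dl_eqv. apply dl_mult'. apply dE.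
        apply (dl_comp' (fun s => L * (s - t0)) exp).
        apply dl_scal. apply dl_minus'. apply dl_id'. apply dl_const'.
        apply derivable_pt_lim_exp. simpl. ring. }
      assert (HG := nonincr G _ dG).
      assert (Hle : G t0 <= G t).
      { apply HG; [|lra]. intro s. assert (0 < exp (L * (s - t0))) by apply exp_pos.
        assert (- L * E s <= E' s) by (specialize (bE s); apply abs_le_inv in bE; lra). nra. }
      unfold G in Hle. rewrite E0 in Hle.
      assert (0 < exp (L * (t - t0))) by apply exp_pos. specialize (Epos t). nra. }
  intro t. specialize (Ezero t). unfold E in Ezero. apply sq0 in Ezero. lra.
Qed.

Lemma exp_le x y : x <= y -> exp x <= exp y.
Proof. intros [H|H]; [left; apply exp_increasing; auto|subst; lra]. Qed.

Lemma cosh_ge1 x : 1 <= cosh x.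
Proof.
  unfold cosh. rewrite exp_Ropp. assert (0 < exp x) by apply exp_pos.
  assert (exp x + / exp x - 2 = (exp x - 1) * (exp x - 1) / exp x) by (field; lra).
  assert (0 <= (exp x - 1) * (exp x - 1) / exp x).
  { apply Rmult_le_pos; [apply Rle_0_sqr| left; apply Rinv_0_lt_compat; auto]. }
  lra.
Qed.

Lemma sinh_le_cosh x : Rabs (sinh x) <= cosh x.
Proof.
  unfold sinh, cosh. assert (0 < exp x) by apply exp_pos. assert (0 < exp (-x)) by apply exp_pos.
  apply Rabs_le. lra.
Qed.

Lemma cosh_between a b c : Rmin a b <= c <= Rmax a b -> cosh c <= cosh a + cosh b.
Proof.
  intros Hc. unfold cosh.
  assert (exp c <= exp a + exp b).
  { unfold Rmin, Rmax in Hc. assert (0 < exp a) by apply exp_pos. assert (0 < exp b) by apply exp_pos.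
    destruct (Rle_dec a b).
    - assert (exp c <= exp b) by (apply exp_le; lra). lra.
    - assert (exp c <= exp a) by (apply exp_le; lra). lra. }
  assert (exp (-c) <= exp (-a) + exp (-b)).
  { unfold Rmin, Rmax in Hc. assert (0 < exp (-a)) by apply exp_pos. assert (0 < exp (-b)) by apply exp_pos.
    destruct (Rle_dec a b).
    - assert (exp (-c) <= exp (-a)) by (apply exp_le; lra). lra.
    - assert (exp (-c) <= exp (-b)) by (apply exp_le; lra). lra. }
  lra.
Qed.

Lemma sinh_opp x : sinh (- x) = - sinh x.
Proof. unfold sinh. rewrite Ropp_involutive. field. Qed.
Lemma cosh_opp x : cosh (- x) = cosh x.
Proof. unfold cosh. rewrite Ropp_involutive. field. Qed.

Section Sys.
Variables (dd m1 m2 h g : R).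
Hypotheses (Hd : 0 < dd) (Hm1 : 0 < m1) (Hm2 : 0 < m2) (Hh : h < 0).

Definition Flam l := - dH_lam dd m1 m2 h l.
Definition Fnu n := - dH_nu dd m1 m2 h n.
Definition sol_lam (x p : R -> R) := forall t, dl x t (p t) /\ dl p t (Flam (x t)).
Definition sol_nu (x p : R -> R) := forall t, dl x t (p t) /\ dl p t (Fnu (x t)).
Definition lev_lam (x p : R -> R) := forall t, H_lam dd m1 m2 h (x t) (p t) = - g.

Definition Clam := (dd * (m1 + m2) + Rabs g) / (- h * dd ^ 2) + 1.
Definition Klam := 2 * (dd * (m1 + m2)) * (2 * Clam) + 16 * (- h * dd ^ 2) * (2 * Clam) ^ 2.

Lemma lev_bound l p : H_lam dd m1 m2 h l p = - g -> cosh l <= Clam.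
Proof.
  unfold H_lam, Clam. intros E.
  set (c := cosh l) in *. set (A := dd * (m1 + m2)) in *. set (B := - h * dd ^ 2).
  assert (HB : 0 < B) by (unfold B; assert (0 < dd ^ 2) by (apply pow_lt; auto); nra).
  assert (HA : 0 < A) by (unfold A; nra).
  assert (Hc : 1 <= c) by apply cosh_ge1.
  assert (B * c * c <= (Rabs g + A) * c).
  { pose proof (Rle_abs (-g)). rewrite Rabs_Ropp in H. assert (0 <= p ^ 2) by (apply pow2_ge_0).
    assert (E' : B * c * c = - g - p ^ 2 / 2 + A * c) by (unfold B; rewrite <- E; ring).
    rewrite E'. pose proof (Rabs_pos g). nra. }
  assert (B * c <= Rabs g + A) by nra.
  assert (c <= (Rabs g + A) / B).
  { apply Rmult_le_reg_l with B; auto. field_simplify; lra. }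
  replace (A + Rabs g) with (Rabs g + A) by ring. fold B. lra.
Qed.

Definition dFlam l := dd * (m1 + m2) * cosh l + 2 * h * dd ^ 2 * (sinh l * sinh l + cosh l * cosh l).

Lemma Flam_deriv l : dl Flam l (dFlam l).
Proof.
  unfold Flam, dH_lam, dFlam.
  eapply dl_ext with (f := fun l => dd * (m1 + m2) * sinh l + 2 * h * dd ^ 2 * (cosh l * sinh l)).
  { intro t. ring. }
  eapply dl_eqv. apply dl_plus'. apply dl_scal. apply derivable_pt_lim_sinh.
  apply dl_scal. apply dl_mult'. apply derivable_pt_lim_cosh. apply derivable_pt_lim_sinh.
  ring.
Qed.

Lemma Flam_lip a b : cosh a <= Clam -> cosh b <= Clam ->
  Rabs (Flam a - Flam b) <= Klam * Rabs (a - b).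
Proof.
  intros Ha Hb. apply (lip_mvt Flam dFlam (fun l => cosh l <= Clam)); auto.
  - apply Flam_deriv.
  - intros x y c Hx Hy Hc. unfold dFlam, Klam.
    assert (Hcc := cosh_between _ _ _ Hc).
    assert (H1 := cosh_ge1 c). assert (H2 := sinh_le_cosh c).
    set (C := Clam) in *. set (co := cosh c) in *. set (si := sinh c) in *.
    assert (Hsi : si * si <= co * co).
    { assert (Rabs si * Rabs si = si * si) by (rewrite <- Rabs_mult; apply Rabs_right; apply Rle_ge, Rle_0_sqr).
      assert (0 <= Rabs si) by apply Rabs_pos. nra. }
    assert (Hco : co <= 2 * C) by lra.
    assert (HA : 0 < dd * (m1 + m2)) by nra.
    assert (HB : 0 < - h * dd ^ 2) by (assert (0 < dd ^ 2) by (apply pow_lt; auto); nra).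
    apply Rabs_le. set (A := dd * (m1 + m2)) in *. set (B := - h * dd ^ 2) in *.
    replace (2 * h * dd ^ 2) with (- 2 * B) by (unfold B; ring).
    assert (0 <= si * si) by apply Rle_0_sqr.
    assert (co * co <= (2 * C) * (2 * C)) by nra.
    replace ((2 * C) ^ 2) with ((2 * C) * (2 * C)) by ring.
    split; nra.
Qed.

Lemma Klam_pos : 0 <= Klam.
Proof.
  unfold Klam. assert (1 <= Clam).
  { unfold Clam. assert (0 < - h * dd ^ 2) by (assert (0 < dd ^ 2) by (apply pow_lt; auto); nra).
    assert (0 <= (dd * (m1 + m2) + Rabs g) / (- h * dd ^ 2)).
    { apply Rmult_le_pos. pose proof (Rabs_pos g). nra. left; apply Rinv_0_lt_compat; auto. }
    lra. }
  assert (0 < - h * dd ^ 2) by (assert (0 < dd ^ 2) by (apply pow_lt; auto); nra).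
  assert (0 < dd * (m1 + m2)) by nra.
  assert (0 <= (2 * Clam) ^ 2) by apply pow2_ge_0. nra.
Qed.

Lemma uniq_lam x1 p1 x2 p2 t0 : sol_lam x1 p1 -> sol_lam x2 p2 -> lev_lam x1 p1 -> lev_lam x2 p2 ->
  x1 t0 = x2 t0 -> p1 t0 = p2 t0 -> forall t, x1 t = x2 t /\ p1 t = p2 t.
Proof.
  intros S1 S2 L1 L2 E1 E2.
  apply (uniq2 Flam (fun l => cosh l <= Clam) Klam Klam_pos Flam_lip x1 p1 x2 p2 t0); auto.
  - intro t. apply (lev_bound _ (p1 t)). apply L1.
  - intro t. apply (lev_bound _ (p2 t)). apply L2.
Qed.

Definition dFnu n := dd * (m1 - m2) * sin n - 2 * h * dd ^ 2 * (cos n * cos n - sin n * sin n).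
Definition Knu := Rabs (dd * (m1 - m2)) + 4 * (- h * dd ^ 2).

Lemma Fnu_deriv n : dl Fnu n (dFnu n).
Proof.
  unfold Fnu, dH_nu, dFnu.
  eapply dl_ext with (f := fun n => - (dd * (m1 - m2)) * cos n + (- (2 * h * dd ^ 2)) * (sin n * cos n)).
  { intro t. ring. }
  eapply dl_eqv. apply dl_plus'. apply dl_scal. apply derivable_pt_lim_cos.
  apply dl_scal. apply dl_mult'. apply derivable_pt_lim_sin. apply derivable_pt_lim_cos.
  ring.
Qed.

Lemma Fnu_lip a b : True -> True -> Rabs (Fnu a - Fnu b) <= Knu * Rabs (a - b).
Proof.
  intros _ _. apply (lip_mvt Fnu dFnu (fun _ => True)); auto.
  - apply Fnu_deriv.
  - intros x y c _ _ _. unfold dFnu, Knu.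
    assert (HB : 0 < - h * dd ^ 2) by (assert (0 < dd ^ 2) by (apply pow_lt; auto); nra).
    set (B := - h * dd ^ 2) in *. replace (2 * h * dd ^ 2) with (- 2 * B) by (unfold B; ring).
    pose proof (SIN_bound c). pose proof (COS_bound c).
    set (am := dd * (m1 - m2)). assert (Ha := abs_le_inv am (Rabs am) (Rle_refl _)).
    set (s := sin c) in *. set (co := cos c) in *.
    clearbody s co am B. assert (P1 : am * s <= Rabs am) by nra. assert (P2 : - Rabs am <= am * s) by nra.
    assert (0 <= co * co <= 1) by nra. assert (0 <= s * s <= 1) by nra.
    apply Rabs_le. split; nra.
Qed.

Lemma Knu_pos : 0 <= Knu.
Proof. unfold Knu. pose proof (Rabs_pos (dd * (m1 - m2))). assert (0 < dd ^ 2) by (apply pow_lt; auto). nra. Qed.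

Lemma uniq_nu x1 p1 x2 p2 t0 : sol_nu x1 p1 -> sol_nu x2 p2 ->
  x1 t0 = x2 t0 -> p1 t0 = p2 t0 -> forall t, x1 t = x2 t /\ p1 t = p2 t.
Proof.
  intros S1 S2 E1 E2.
  apply (uniq2 Fnu (fun _ => True) Knu Knu_pos Fnu_lip x1 p1 x2 p2 t0); auto.
Qed.

Lemma Flam_odd l : Flam (- l) = - Flam l.
Proof. unfold Flam, dH_lam. rewrite sinh_opp, cosh_opp. ring. Qed.

Lemma sol_lam_neg x p : sol_lam x p -> sol_lam (fun t => - x t) (fun t => - p t).
Proof.
  intros S t. destruct (S t) as [A B]. split.
  - apply dl_opp'. auto.
  - rewrite Flam_odd. apply dl_opp'. auto.
Qed.

Lemma lev_lam_neg x p : lev_lam x p -> lev_lam (fun t => - x t) (fun t => - p t).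
Proof. intros L t. cbv beta. rewrite <- (L t). unfold H_lam. rewrite cosh_opp. field. Qed.

Lemma sol_lam_shift x p c : sol_lam x p -> sol_lam (fun t => x (t + c)) (fun t => p (t + c)).
Proof. intros S t. destruct (S (t + c)) as [A B]. split; apply dl_shift; auto. Qed.

Lemma lev_lam_shift x p c : lev_lam x p -> lev_lam (fun t => x (t + c)) (fun t => p (t + c)).
Proof. intros L t. apply L. Qed.

Lemma sol_nu_shift x p c : sol_nu x p -> sol_nu (fun t => x (t + c)) (fun t => p (t + c)).
Proof. intros S t. destruct (S (t + c)) as [A B]. split; apply dl_shift; auto. Qed.

Lemma sol_nu_rev x p c : sol_nu x p -> sol_nu (fun t => x (c - t)) (fun t => - p (c - t)).
Proof.
  intros S t. destruct (S (c - t)) as [A B]. split.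
  - apply dl_refl. auto.
  - eapply dl_eqv. apply dl_opp'. apply dl_refl. apply B. ring.
Qed.

Lemma Fnu_refl a n : cos a = 0 -> Fnu (2 * a - n) = - Fnu n.
Proof.
  intros Ha. unfold Fnu, dH_nu. rewrite sin_minus, cos_minus, sin_2a, cos_2a_sin, Ha.
  assert (sin a * sin a = 1) by (pose proof (sin2 a); unfold Rsqr in H; rewrite Ha in H; lra).
  replace (1 - 2 * sin a * sin a) with (-1) by lra. ring.
Qed.

Lemma sol_nu_refl x p c a : cos a = 0 -> sol_nu x p -> sol_nu (fun t => 2 * a - x (c - t)) (fun t => p (c - t)).
Proof.
  intros Ha S t. destruct (S (c - t)) as [A B]. split.
  - eapply dl_eqv. apply dl_minus'. apply dl_const'. apply dl_refl. apply A. ring.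
  - rewrite Fnu_refl by auto. eapply dl_eqv. apply dl_refl. apply B. ring.
Qed.

End Sys.



Lemma Zshift (P : R -> Prop) tau : (forall s, P (s + tau) <-> P s) ->
  forall j s, P (s + IZR j * tau) <-> P s.
Proof.
  intros H j. induction j using Z.peano_ind; intro s.
  - rewrite Rmult_0_l, Rplus_0_r. tauto.
  - rewrite succ_IZR. replace (s + (IZR j + 1) * tau) with ((s + IZR j * tau) + tau) by ring.
    rewrite H. apply IHj.
  - rewrite <- Z.sub_1_r, minus_IZR. rewrite <- (H (s + (IZR j - 1) * tau)).
    replace (s + (IZR j - 1) * tau + tau) with (s + IZR j * tau) by ring. apply IHj.
Qed.

Lemma Zshift_eq (f : R -> R) tau : (forall s, f (s + tau) = f s) ->
  forall j s, f (s + IZR j * tau) = f s.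
Proof.
  intros H j s. apply (Zshift (fun u => f u = f s) tau); [|reflexivity].
  intro u. rewrite H. tauto.
Qed.

Lemma floor_dec tau x : 0 < tau -> exists j r, 0 <= r < tau /\ x = r + IZR j * tau.
Proof.
  intros Ht. destruct (base_Int_part (x / tau)) as [A B].
  exists (Int_part (x / tau)), (x - IZR (Int_part (x / tau)) * tau). split; [|ring].
  set (k := IZR (Int_part (x / tau))) in *.
  assert (x = (x / tau) * tau) by (field; lra).
  split; nra.
Qed.

Section Lam.
Variables (dd m1 m2 h g : R).
Hypotheses (Hd : 0 < dd) (Hm1 : 0 < m1) (Hm2 : 0 < m2) (Hh : h < 0).

Lemma dH_lam0 : dH_lam dd m1 m2 h 0 = 0.
Proof. unfold dH_lam, sinh. rewrite Ropp_0. field. Qed.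

Lemma lam_structure (x p : R -> R) Tl :
  sol_lam dd m1 m2 h x p -> lev_lam dd m1 m2 h g x p ->
  regular_value (H_lam dd m1 m2 h) (dH_lam dd m1 m2 h) (- g) ->
  min_period (lam_per x p) Tl -> forall t1, x t1 = 0 ->
  (forall s, x (s + Tl / 2) = - x s /\ p (s + Tl / 2) = - p s) /\
  (forall t, x t = 0 <-> exists j : Z, t = t1 + IZR j * (Tl / 2)).
Proof.
  intros Hs Hl Hr [HT0 [HT1 HT2]] t1 Ht1.
  assert (Hc : forall t, continuity_pt x t) by (intro t; apply (dl_cont _ _ _ (proj1 (Hs t)))).
  set (P := p t1).
  assert (HP : P <> 0).
  { intro E. destruct (Hr (x t1) (p t1) (Hl t1)) as [A|A]; [rewrite Ht1, dH_lam0 in A|]; auto. }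
  destruct (sign_near x t1 P (proj1 (Hs t1)) Ht1 HP) as [eps [Heps Hsg]].
  set (h0 := Rmin (eps / 2) (Tl / 2)).
  assert (Hh0 : 0 < h0 <= eps / 2 /\ h0 <= Tl / 2) by (unfold h0, Rmin; destruct Rle_dec; lra).
  assert (Hxh0 : x (t1 + h0) * P > 0) by (apply Hsg; lra).
  assert (HxT : x (t1 + Tl) = 0) by (rewrite (proj1 (HT1 t1)); auto).
  destruct (first_zero x (t1 + h0) (t1 + Tl) Hc ltac:(lra)
     ltac:(intro E; rewrite E in Hxh0; lra) HxT) as [t2 [Ht2 [Hx2 Hnz]]].
  assert (Hpos : forall s, t1 < s < t2 -> x s * P > 0).
  { intros s Hs'. destruct (Rlt_dec s (t1 + eps)).
    - replace s with (t1 + (s - t1)) by ring. apply Hsg. lra.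
    - destruct (Rlt_dec 0 (x s * P)) as [|Hn]; [lra|]. exfalso.
      assert (Hxs : x s <> 0) by (apply Hnz; lra).
      assert (x s * P < 0).
      { apply Rnot_lt_le in Hn. destruct Hn; auto. exfalso. apply Rmult_integral in H. tauto. }
      destruct (Rle_lt_or_eq_dec (t1 + h0) s ltac:(lra)) as [Hlt|Heq].
      + destruct (ivt0 x (t1 + h0) s Hc Hlt) as [c [Hc1 Hc2]].
        * assert (x (t1 + h0) * x s * (P * P) < 0) by nra.
          assert (0 < P * P) by (apply Rsqr_pos_lt in HP; unfold Rsqr in HP; auto). nra.
        * apply (Hnz c); auto; lra.
      + rewrite Heq in Hxh0. lra. }
  set (Q := p t2).
  assert (HQ2 : Q * Q = P * P).
  { assert (A := Hl t1). assert (B := Hl t2). unfold H_lam in A, B. rewrite Ht1 in A. rewrite Hx2 in B.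
    fold P in A. fold Q in B. assert (P ^ 2 = Q ^ 2) by lra. simpl in H. lra. }
  assert (HQ : Q <> 0). { intro E. rewrite E in HQ2. apply HP. nra. }
  destruct (sign_near x t2 Q (proj1 (Hs t2)) Hx2 HQ) as [eps2 [Heps2 Hsg2]].
  assert (HPQ : P * Q < 0).
  { set (hh := Rmin (eps2 / 2) ((t2 - t1) / 2)).
    assert (0 < hh <= eps2 / 2 /\ hh <= (t2 - t1) / 2) by (unfold hh, Rmin; destruct Rle_dec; lra).
    assert (A := proj2 (Hsg2 hh ltac:(lra))). assert (B := Hpos (t2 - hh) ltac:(lra)).
    assert (x (t2 - hh) * Q * (x (t2 - hh) * P) < 0) by nra.
    assert (x (t2 - hh) <> 0) by (intro E; rewrite E in A; lra).
    assert (0 < x (t2 - hh) * x (t2 - hh)) by (apply Rsqr_pos_lt in H1; unfold Rsqr in H1; auto). nra. }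
  assert (HQP : Q = - P) by nra.
  set (tau := t2 - t1).
  assert (Hsym : forall s, x s = - x (s + - tau) /\ p s = - p (s + - tau)).
  { apply (uniq_lam dd m1 m2 h g Hd Hm1 Hm2 Hh x p (fun s => - x (s + - tau)) (fun s => - p (s + - tau)) t2); auto.
    - apply sol_lam_neg. apply sol_lam_shift. auto.
    - apply lev_lam_neg. apply lev_lam_shift. auto.
    - unfold tau. replace (t2 + - (t2 - t1)) with t1 by ring. rewrite Hx2, Ht1. ring.
    - unfold tau. replace (t2 + - (t2 - t1)) with t1 by ring. fold Q. fold P. lra. }
  assert (Hhalf : forall s, x (s + tau) = - x s /\ p (s + tau) = - p s).
  { intro s. destruct (Hsym (s + tau)) as [A B]. replace (s + tau + - tau) with s in A, B by ring. lra. }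
  assert (Hper2 : lam_per x p (2 * tau)).
  { intro s. destruct (Hhalf s) as [A B]. destruct (Hhalf (s + tau)) as [C D].
    replace (s + 2 * tau) with (s + tau + tau) by ring. rewrite C, D, A, B. split; ring. }
  assert (Htau : Tl = 2 * tau).
  { assert (Tl <= 2 * tau).
    { destruct (Rle_dec Tl (2 * tau)); auto. exfalso. apply Rnot_le_lt in n. apply (HT2 (2 * tau)); auto. unfold tau in *. lra. }
    destruct (Rle_lt_or_eq_dec _ _ H) as [Hlt|]; auto. exfalso.
    destruct (Rle_lt_or_eq_dec t2 (t1 + Tl) ltac:(lra)) as [Hlt2|Heq2].
    + destruct (Hhalf (t1 + Tl - tau)) as [A _].
      replace (t1 + Tl - tau + tau) with (t1 + Tl) in A by ring. rewrite HxT in A.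
      assert (x (t1 + Tl - tau) * P > 0) by (apply Hpos; unfold tau in *; lra).
      assert (x (t1 + Tl - tau) = 0) by lra. rewrite H1 in H0. lra.
    + assert (p (t1 + Tl) = P) by (unfold P; apply (HT1 t1)).
      rewrite <- Heq2 in H0. fold Q in H0. lra. }
  assert (Ht2' : Tl / 2 = tau) by lra.
  rewrite Ht2'. split; auto.
  assert (Hz : forall j s, x (s + IZR j * tau) = 0 <-> x s = 0).
  { apply (Zshift (fun u => x u = 0)). intro s. rewrite (proj1 (Hhalf s)). split; intro; lra. }
  intro t. split.
  - intro Hx. destruct (floor_dec tau (t - t1) ltac:(unfold tau; lra)) as [j [r [Hr1 Hr2]]].
    exists j. assert (x (t1 + r) = 0).
    { apply (Hz j). replace (t1 + r + IZR j * tau) with t by lra. auto. }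
    destruct (Rle_lt_or_eq_dec 0 r ltac:(lra)) as [Hr0|Hr0].
    + exfalso. assert (x (t1 + r) * P > 0) by (apply Hpos; unfold tau in *; lra). rewrite H in H0. lra.
    + subst r. lra.
  - intros [j Hj]. subst t. apply Hz. auto.
Qed.

End Lam.

Lemma sin_2pi s : sin (s + 2 * PI) = sin s.
Proof. rewrite sin_plus, sin_2PI, cos_2PI. ring. Qed.
Lemma cos_2pi s : cos (s + 2 * PI) = cos s.
Proof. rewrite cos_plus, sin_2PI, cos_2PI. ring. Qed.
Lemma sinZ j s : sin (s + IZR j * (2 * PI)) = sin s.
Proof. apply (Zshift_eq sin). apply sin_2pi. Qed.
Lemma cosZ j s : cos (s + IZR j * (2 * PI)) = cos s.
Proof. apply (Zshift_eq cos). apply cos_2pi. Qed.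

Lemma eqmod_sin a b : eqmod2pi a b -> sin a = sin b.
Proof. intros [k ->]. replace (b + 2 * PI * IZR k) with (b + IZR k * (2 * PI)) by ring. apply sinZ. Qed.
Lemma eqmod_cos a b : eqmod2pi a b -> cos a = cos b.
Proof. intros [k ->]. replace (b + 2 * PI * IZR k) with (b + IZR k * (2 * PI)) by ring. apply cosZ. Qed.

Lemma sin_halfodd n : sin (- (PI / 2) + IZR n * PI) = if Z.even n then -1 else 1.
Proof.
  rewrite (Z.div2_odd n) at 1. set (m := Z.div2 n).
  rewrite plus_IZR, mult_IZR.
  replace (Z.even n) with (negb (Z.odd n)) by (rewrite <- Z.negb_odd; auto).
  destruct (Z.odd n); cbn [Z.b2z negb].
  - replace (- (PI / 2) + (2 * IZR m + IZR 1) * PI) with (PI / 2 + IZR m * (2 * PI)) by (simpl; field).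
    rewrite sinZ. apply sin_PI2.
  - replace (- (PI / 2) + (2 * IZR m + IZR 0) * PI) with (- (PI / 2) + IZR m * (2 * PI)) by (simpl; field).
    rewrite sinZ. rewrite sin_neg, sin_PI2. ring.
Qed.

Lemma cos_halfodd n : cos (- (PI / 2) + IZR n * PI) = 0.
Proof. apply cos_eq_0_1. exists (n - 1)%Z. rewrite minus_IZR. field. Qed.

Lemma cos0_near a y : cos a = 0 -> 0 < Rabs (y - a) < PI -> cos y <> 0.
Proof.
  intros Ha Hy Hc. destruct (cos_eq_0_0 a Ha) as [k1 E1]. destruct (cos_eq_0_0 y Hc) as [k2 E2].
  assert (y - a = IZR (k2 - k1) * PI) by (rewrite minus_IZR; lra).
  rewrite H, Rabs_mult, (Rabs_right PI) in Hy by (left; apply PI_RGT_0).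
  assert (HP := PI_RGT_0).
  assert (0 < Rabs (IZR (k2 - k1)) < 1) by (split; nra).
  rewrite <- abs_IZR in H0. destruct H0 as [A B]. apply lt_IZR in A. apply lt_IZR in B. lia.
Qed.

Lemma periodic_max f T0 : 0 < T0 -> (forall t, continuity_pt f t) -> (forall t, f (t + T0) = f t) ->
  exists tM, forall t, f t <= f tM.
Proof.
  intros HT Hc Hp. destruct (continuity_ab_maj f 0 T0 ltac:(lra) (fun c _ => Hc c)) as [M [HM _]].
  exists M. intro t. destruct (floor_dec T0 t HT) as [j [r [Hr ->]]].
  rewrite (Zshift_eq f T0 Hp). apply HM. lra.
Qed.
Lemma periodic_min f T0 : 0 < T0 -> (forall t, continuity_pt f t) -> (forall t, f (t + T0) = f t) ->
  exists tm, forall t, f tm <= f t.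
Proof.
  intros HT Hc Hp. destruct (periodic_max (fun t => - f t) T0 HT) as [m Hm].
  - intro t. apply continuity_pt_opp. auto.
  - intro t. rewrite Hp. auto.
  - exists m. intro t. specialize (Hm t). lra.
Qed.

Lemma deriv_at_max f l tM : dl f tM l -> (forall t, f t <= f tM) -> l = 0.
Proof.
  intros H Hm. assert (pr : derivable_pt f tM) by (exists l; auto).
  rewrite <- (derive_pt_eq_0 f tM l pr H). apply (deriv_maximum f (tM - 1) (tM + 1)); try lra.
  intros; auto.
Qed.
Lemma deriv_at_min f l tm : dl f tm l -> (forall t, f tm <= f t) -> l = 0.
Proof.
  intros H Hm. assert (pr : derivable_pt f tm) by (exists l; auto).
  rewrite <- (derive_pt_eq_0 f tm l pr H). apply (deriv_minimum f (tm - 1) (tm + 1)); try lra.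
  intros; auto.
Qed.

Lemma const_fun_deriv f c t l : (forall s, f s = c) -> dl f t l -> l = 0.
Proof.
  intros E H. apply (uniqueness_limite f t). auto. apply (dl_ext (fun _ => c)). intros; auto. apply dl_const'.
Qed.

Lemma nz_cases y : y <> 0 -> y < 0 \/ 0 < y.
Proof. intros H. destruct (Rtotal_order y 0) as [?|[?|?]]; auto; contradiction. Qed.

Lemma const_sign f : (forall t, continuity_pt f t) -> (forall t, f t <> 0) ->
  (forall t, 0 < f t) \/ (forall t, f t < 0).
Proof.
  intros Hc Hn.
  assert (K : forall t, f 0 * f t > 0).
  { intro t. destruct (Rlt_dec 0 (f 0 * f t)); auto. exfalso.
    assert (f 0 * f t < 0).
    { assert (Hne : f 0 * f t <> 0).
      { intro E. apply Rmult_integral in E. destruct E; eapply Hn; eauto. }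
      destruct (nz_cases _ Hne); auto. lra. }
    destruct (Rtotal_order 0 t) as [A|[A|A]].
    + destruct (ivt0 f 0 t Hc A H) as [c [_ Hc0]]. apply (Hn c); auto.
    + subst. nra.
    + destruct (ivt0 f t 0 Hc A ltac:(nra)) as [c [_ Hc0]]. apply (Hn c); auto. }
  destruct (nz_cases (f 0) (Hn 0)).
  - right. intro t. specialize (K t). nra.
  - left. intro t. specialize (K t). nra.
Qed.

Lemma winding x p Tn : (forall t, dl x t (p t)) -> nu_per x p Tn ->
  exists k : Z, forall t, x (t + Tn) = x t + 2 * PI * IZR k.
Proof.
  intros Hd Hp. destruct (proj1 (Hp 0)) as [k Hk]. exists k. intro t.
  assert (E := const_deriv0 (fun s => x (s + Tn) - x s)).
  rewrite Rplus_0_l in Hk.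
  assert (x (t + Tn) - x t = x (0 + Tn) - x 0).
  { apply E. intro s. eapply dl_eqv. apply dl_minus'. apply dl_shift. apply Hd. apply Hd.
    rewrite (proj2 (Hp s)). ring. }
  rewrite Rplus_0_l in H. lra.
Qed.

Section Nu.
Variables (dd m1 m2 h g : R).
Hypotheses (Hd : 0 < dd) (Hm1 : 0 < m1) (Hm2 : 0 < m2) (Hh : h < 0).

Lemma nu_rot x p Tn : sol_nu dd m1 m2 h x p -> min_period (nu_per x p) Tn -> x Tn <> x 0 ->
  exists c D, 0 < D /\ Tn = 2 * D /\
    (forall t, cos (x t) = 0 <-> exists j : Z, t = c + IZR j * D) /\
    (forall j : Z, sin (x (c + IZR j * D)) = if Z.even j then -1 else 1).
Proof.
  intros Hs [HT0 [HT1 HT2]] Hneq.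
  assert (Hdx : forall t, dl x t (p t)) by (intro t; apply (Hs t)).
  assert (Hcx : forall t, continuity_pt x t) by (intro t; apply (dl_cont _ _ _ (Hdx t))).
  assert (Hcp : forall t, continuity_pt p t) by (intro t; apply (dl_cont _ _ _ (proj2 (Hs t)))).
  destruct (winding x p Tn Hdx HT1) as [k Hk].
  assert (Hk0 : IZR k <> 0).
  { intro E. apply Hneq. rewrite <- (Rplus_0_l Tn), Hk, E. ring. }
  assert (Hpnz : forall t, p t <> 0).
  { intros t0 E0.
    destruct (uniq_nu dd m1 m2 h Hd Hh x p (fun s => x (2 * t0 - s)) (fun s => - p (2 * t0 - s)) t0 Hs
      (sol_nu_rev dd m1 m2 h x p (2 * t0) Hs)) with (t := t0 + Tn) as [A _].
    - replace (2 * t0 - t0) with t0 by ring. auto.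
    - replace (2 * t0 - t0) with t0 by ring. rewrite E0. ring.
    - replace (2 * t0 - (t0 + Tn)) with (t0 - Tn) in A by ring.
      assert (B := Hk (t0 - Tn)). replace (t0 - Tn + Tn) with t0 in B by ring.
      rewrite Hk in A. apply Hk0. assert (HP := PI_RGT_0). nra. }
  assert (Hsg : exists sg : Z, (sg = 1 \/ sg = -1)%Z /\ forall t, IZR sg * p t > 0).
  { destruct (const_sign p Hcp Hpnz) as [A|A]; [exists 1%Z|exists (-1)%Z]; split; auto; intro t;
      specialize (A t); simpl; lra. }
  destruct Hsg as [sg [Hsg1 Hsg2]].
  set (s := IZR sg).
  assert (Hs2 : s * s = 1) by (unfold s; destruct Hsg1 as [-> | ->]; simpl; lra).
  assert (Hmono : forall u v, u < v -> s * x u < s * x v).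
  { intros u v Huv. destruct (MVT_cor2 x p u v Huv (fun c _ => Hdx c)) as [xi [E _]].
    assert (s * (x v - x u) = s * p xi * (v - u)) by (rewrite E; ring).
    specialize (Hsg2 xi). fold s in Hsg2. nra. }
  assert (Hinj : forall u v, x u = x v -> u = v).
  { intros u v E. destruct (Rtotal_order u v) as [A|[A|A]]; auto.
    - apply Hmono in A. rewrite E in A. lra.
    - apply Hmono in A. rewrite E in A. lra. }
  assert (Hsk : 1 <= s * IZR k).
  { assert (A := Hmono 0 Tn HT0). rewrite <- (Rplus_0_l Tn), Hk in A.
    assert (0 < s * IZR k) by (assert (HP := PI_RGT_0); nra).
    unfold s in *. rewrite <- mult_IZR in *. apply lt_IZR in H. apply IZR_le. lia. }
  set (M := Int_part ((x 0 + PI / 2) / (2 * PI))).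
  assert (HP := PI_RGT_0).
  destruct (base_Int_part ((x 0 + PI / 2) / (2 * PI))) as [B1 B2]. fold M in B1, B2.
  set (M2 := if Z.eq_dec sg 1 then (2 * (M + 1))%Z else (2 * M)%Z).
  set (a := - (PI / 2) + IZR M2 * PI).
  assert (Ha : Rmin (x 0) (x (0 + Tn)) <= a <= Rmax (x 0) (x (0 + Tn))).
  { rewrite Hk. assert (Heq : x 0 = ((x 0 + PI / 2) / (2 * PI)) * (2 * PI) - PI / 2) by (field; lra).
    unfold a, M2, Rmin, Rmax. destruct (Z.eq_dec sg 1) as [E|E].
    - assert (1 <= IZR k) by (unfold s in Hsk; rewrite E in Hsk; lra).
      rewrite mult_IZR, plus_IZR. simpl IZR.
      destruct Rle_dec; [|nra]. split; nra.
    - assert (sg = -1)%Z by lia. assert (IZR k <= -1) by (unfold s in Hsk; rewrite H in Hsk; simpl in Hsk; lra).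
      rewrite mult_IZR. simpl IZR.
      destruct Rle_dec; [nra|]. split; nra. }
  rewrite Rplus_0_l in Ha. destruct (ivt_val x 0 Tn a Hcx ltac:(lra) Ha) as [c [_ Hc]].
  assert (Hca : cos a = 0) by apply cos_halfodd.
  assert (R1 : forall u, x u = 2 * a - x (2 * c - u) /\ p u = p (2 * c - u)).
  { apply (uniq_nu dd m1 m2 h Hd Hh x p _ _ c Hs (sol_nu_refl dd m1 m2 h x p (2 * c) a Hca Hs)).
    - replace (2 * c - c) with c by ring. rewrite Hc. ring.
    - replace (2 * c - c) with c by ring. auto. }
  set (a' := a + s * PI).
  assert (Ha'e : a' = - (PI / 2) + IZR (M2 + sg) * PI) by (unfold a', a, s; rewrite plus_IZR; ring).
  assert (Hca' : cos a' = 0) by (rewrite Ha'e; apply cos_halfodd).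
  assert (Ha' : Rmin (x c) (x (c + Tn)) <= a' <= Rmax (x c) (x (c + Tn))).
  { rewrite Hk, Hc. unfold a', Rmin, Rmax. unfold s in *. destruct Hsg1 as [E|E]; rewrite E in *; simpl IZR in *.
    - assert (1 <= IZR k) by lra. destruct Rle_dec; [split; nra|nra].
    - assert (IZR k <= -1) by lra. destruct Rle_dec; [nra|split; nra]. }
  destruct (ivt_val x c (c + Tn) a' Hcx ltac:(lra) Ha') as [c' [Hc'1 Hc']].
  assert (Hcc' : c < c').
  { destruct (Rle_lt_or_eq_dec _ _ (proj1 Hc'1)) as [A|A]; auto. subst c'.
    rewrite Hc in Hc'. unfold a' in Hc'. assert (s * PI = 0) by lra. unfold s in *.
    destruct Hsg1 as [E|E]; rewrite E in *; simpl in *; lra. }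
  assert (R2 : forall u, x u = 2 * a' - x (2 * c' - u) /\ p u = p (2 * c' - u)).
  { apply (uniq_nu dd m1 m2 h Hd Hh x p _ _ c' Hs (sol_nu_refl dd m1 m2 h x p (2 * c') a' Hca' Hs)).
    - replace (2 * c' - c') with c' by ring. rewrite Hc'. ring.
    - replace (2 * c' - c') with c' by ring. auto. }
  set (D := c' - c).
  assert (Htr : forall u, x (u + 2 * D) = x u + 2 * PI * s /\ p (u + 2 * D) = p u).
  { intro u. destruct (R2 (u + 2 * D)) as [A B]. destruct (R1 u) as [C E].
    replace (2 * c' - (u + 2 * D)) with (2 * c - u) in A, B by (unfold D; ring).
    split.
    - rewrite A. unfold a'. lra.
    - rewrite B. auto. }
  assert (HTn : Tn = 2 * D).
  { assert (Tn <= 2 * D).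
    { destruct (Rle_dec Tn (2 * D)); auto. exfalso. apply Rnot_le_lt in n. apply (HT2 (2 * D)).
      - unfold D in *. lra.
      - intro u. destruct (Htr u) as [A B]. split; auto. exists sg. rewrite A. unfold s. ring. }
    destruct (Rle_lt_or_eq_dec _ _ H) as [A|A]; auto. exfalso.
    assert (B := Hmono (c + Tn) (c + 2 * D) ltac:(lra)).
    rewrite Hk, (proj1 (Htr c)), Hc in B. nra. }
  exists c, D. split; [unfold D; lra|]. split; auto.
  assert (Hvals2 : forall i u, x (u + IZR i * (2 * D)) = x u + IZR i * (2 * PI * s)).
  { intros i u.
    assert (Hf := Zshift_eq (fun v => x v - v * (PI * s / D)) (2 * D)).
    assert (HD : 0 < D) by (unfold D; lra).
    assert (E : forall v, x (v + 2 * D) - (v + 2 * D) * (PI * s / D) = x v - v * (PI * s / D)).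
    { intro v. rewrite (proj1 (Htr v)). field. lra. }
    specialize (Hf E i u). simpl in Hf.
    assert (IZR i * (2 * D) * (PI * s / D) = IZR i * (2 * PI * s)) by (field; lra). nra. }
  assert (Hvals : forall j, x (c + IZR j * D) = - (PI / 2) + IZR (M2 + sg * j) * PI).
  { intro j. rewrite (Z.div2_odd j) at 1. set (i := Z.div2 j).
    assert (Hj : IZR j = 2 * IZR i + IZR (Z.b2z (Z.odd j))).
    { rewrite (Z.div2_odd j) at 1. rewrite plus_IZR, mult_IZR. auto. }
    rewrite plus_IZR, mult_IZR, (plus_IZR M2), mult_IZR, Hj.
    destruct (Z.odd j); simpl IZR.
    - replace (c + (2 * IZR i + 1) * D) with (c' + IZR i * (2 * D)) by (unfold D; ring).
      rewrite Hvals2, Hc'. rewrite Ha'e. rewrite plus_IZR. fold s. ring_simplify. nra.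
    - replace (c + (2 * IZR i + 0) * D) with (c + IZR i * (2 * D)) by ring.
      rewrite Hvals2, Hc. unfold a. fold s. ring_simplify. nra. }
  split.
  - intro t. split.
    + intro Hct. destruct (cos_eq_0_0 _ Hct) as [k' Ek'].
      exists (sg * (k' + 1 - M2))%Z. apply Hinj. rewrite Hvals, Ek'.
      assert (E : (M2 + sg * (sg * (k' + 1 - M2)) = k' + 1)%Z).
      { destruct Hsg1 as [-> | ->]; ring. }
      rewrite E, plus_IZR. simpl. field.
    + intros [j ->]. rewrite Hvals. apply cos_halfodd.
  - intro j. rewrite Hvals, sin_halfodd. f_equal.
    assert (HM2 : exists q, M2 = (2 * q)%Z) by (unfold M2; destruct Z.eq_dec; eauto).
    destruct HM2 as [q ->].
    rewrite Z.add_comm, Z.even_add_mul_2. rewrite Z.even_mul.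
    destruct Hsg1 as [-> | ->]; reflexivity.
Qed.

End Nu.

Lemma cos_refl a y : cos a = 0 -> cos (2 * a - y) = - cos y.
Proof.
  intros Ha. rewrite cos_minus, sin_2a, cos_2a_sin, Ha.
  assert (sin a * sin a = 1) by (pose proof (sin2 a); unfold Rsqr in H; rewrite Ha in H; lra).
  replace (1 - 2 * sin a * sin a) with (-1) by lra. ring.
Qed.

Lemma dHnu_cos0 dd m1 m2 h a : cos a = 0 -> dH_nu dd m1 m2 h a = 0.
Proof. intros Ha. unfold dH_nu. rewrite Ha. ring. Qed.

Lemma prod_neg a b : a <> 0 -> b <> 0 -> ~ 0 < a * b -> a * b < 0.
Proof.
  intros A B C. assert (a * b <> 0) by (intro E; apply Rmult_integral in E; tauto).
  destruct (nz_cases _ H); auto. contradiction.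
Qed.

Section Osc.
Variables (dd m1 m2 h g : R).
Hypotheses (Hd : 0 < dd) (Hm1 : 0 < m1) (Hm2 : 0 < m2) (Hh : h < 0).

Definition lev_nu (x p : R -> R) := forall t, H_nu dd m1 m2 h (x t) (p t) = g.

Lemma nu_osc x p Tn : sol_nu dd m1 m2 h x p -> lev_nu x p ->
  regular_value (H_nu dd m1 m2 h) (dH_nu dd m1 m2 h) g ->
  min_period (nu_per x p) Tn -> x Tn = x 0 ->
  exists c D a, 0 < D /\ Tn = 2 * D /\ cos a = 0 /\
    (forall t, cos (x t) = 0 <-> exists j : Z, t = c + IZR j * D) /\
    (forall j : Z, x (c + IZR j * D) = a) /\
    (exists v, H_nu dd m1 m2 h v 0 = g).
Proof.
  intros Hs Hl Hr [HT0 [HT1 HT2]] Heq.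
  assert (Hdx : forall t, dl x t (p t)) by (intro t; apply (Hs t)).
  assert (Hcx : forall t, continuity_pt x t) by (intro t; apply (dl_cont _ _ _ (Hdx t))).
  assert (Hcp : forall t, continuity_pt p t) by (intro t; apply (dl_cont _ _ _ (proj2 (Hs t)))).
  assert (HP := PI_RGT_0).
  destruct (winding x p Tn Hdx HT1) as [k Hk].
  assert (Hper : forall t, x (t + Tn) = x t).
  { intro t. rewrite Hk. assert (IZR k = 0).
    { specialize (Hk 0). rewrite Rplus_0_l, Heq in Hk. nra. }
    rewrite H. ring. }
  assert (Hpper : forall t, p (t + Tn) = p t) by (intro t; apply (HT1 t)).
  set (V := fun n => dd * (m1 - m2) * sin n + h * dd ^ 2 * (sin n) ^ 2).
  assert (HE : forall t, p t * p t = 2 * (g - V (x t))).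
  { intro t. specialize (Hl t). unfold H_nu in Hl. unfold V. rewrite <- Hl. simpl. field. }
  destruct (periodic_max x Tn HT0 Hcx Hper) as [tM HtM].
  destruct (periodic_min x Tn HT0 Hcx Hper) as [tm Htm].
  assert (HpM : p tM = 0) by (apply (deriv_at_max x _ tM (Hdx tM) HtM)).
  assert (Hpm : p tm = 0) by (apply (deriv_at_min x _ tm (Hdx tm) Htm)).
  assert (Hlt : x tm < x tM).
  { destruct (Rle_lt_or_eq_dec _ _ (Htm tM)) as [A|A]; auto. exfalso.
    assert (Hconst : forall t, x t = x tm) by (intro t; specialize (HtM t); specialize (Htm t); lra).
    assert (Hp0 : forall t, p t = 0) by (intro t; apply (const_fun_deriv x (x tm) t); auto).
    assert (HF : Fnu dd m1 m2 h (x 0) = 0).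
    { apply (const_fun_deriv p 0 0); auto. apply (Hs 0). }
    destruct (Hr (x 0) (p 0) (Hl 0)) as [B|B].
    - apply B. unfold Fnu in HF. lra.
    - apply B. auto. }
  assert (Hatt : forall v, x tm <= v <= x tM -> exists t, x t = v).
  { intros v Hv. destruct (Rle_dec tm tM).
    - destruct (ivt_val x tm tM v Hcx r) as [t [_ Ht]]; [unfold Rmin, Rmax; destruct Rle_dec; lra|eauto].
    - destruct (ivt_val x tM tm v Hcx ltac:(lra)) as [t [_ Ht]]; [unfold Rmin, Rmax; destruct Rle_dec; lra|eauto]. }
  assert (HVle : forall v, x tm <= v <= x tM -> V v <= g).
  { intros v Hv. destruct (Hatt v Hv) as [t Ht]. specialize (HE t). rewrite Ht in HE.
    assert (0 <= p t * p t) by apply Rle_0_sqr. lra. }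
  assert (HVm : V (x tm) = g) by (specialize (HE tm); rewrite Hpm in HE; lra).
  assert (HVM : V (x tM) = g) by (specialize (HE tM); rewrite HpM in HE; lra).
  assert (Hcross : exists v, x tm <= v <= x tM /\ cos v = 0).
  { destruct (Classical_Prop.classic (exists v, x tm <= v <= x tM /\ cos v = 0)) as [A|A]; auto. exfalso.
    set (v1 := x tm) in *. set (v2 := x tM) in *.
    assert (Hcc : forall u, v1 <= u <= v2 -> cos v1 * cos u > 0).
    { intros u Hu. destruct (Rlt_dec 0 (cos v1 * cos u)); auto. exfalso.
      assert (Hn1 : cos v1 <> 0) by (intro E; apply A; exists v1; split; [lra|auto]).
      assert (Hn2 : cos u <> 0) by (intro E; apply A; exists u; split; [lra|auto]).
      assert (cos v1 * cos u < 0).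
      { apply prod_neg; auto. }
      destruct (Rle_lt_or_eq_dec v1 u ltac:(lra)) as [B|B]; [|subst u; nra].
      destruct (ivt0 cos v1 u (fun t => continuity_cos t) B H) as [w [Hw1 Hw2]].
      apply A. exists w. split; [lra|auto]. }
    assert (Hsm : (sin v2 - sin v1) * cos v1 > 0).
    { destruct (MVT_cor2 sin cos v1 v2 Hlt (fun c _ => derivable_pt_lim_sin c)) as [xi [E Hxi]].
      rewrite E. specialize (Hcc xi ltac:(lra)).
      assert (cos v1 * cos v1 > 0).
      { assert (cos v1 <> 0) by (intro E'; rewrite E', Rmult_0_l in Hcc; lra).
        apply Rsqr_pos_lt in H. unfold Rsqr in H. lra. }
      nra. }
    set (sm := (sin v1 + sin v2) / 2).
    destruct (ivt_val sin v1 v2 sm (fun t => continuity_sin t) ltac:(lra)) as [vs [Hvs1 Hvs2]].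
    { unfold sm, Rmin, Rmax. destruct Rle_dec; split; lra. }
    assert (HVs := HVle vs Hvs1). unfold V in HVs, HVm, HVM. fold v1 v2 in HVm, HVM. rewrite Hvs2 in HVs.
    assert (Hne : sin v2 - sin v1 <> 0) by (intro E; rewrite E in Hsm; lra).
    assert (0 < (sin v2 - sin v1) * (sin v2 - sin v1)) by (apply Rsqr_pos_lt in Hne; unfold Rsqr in Hne; lra).
    assert (0 < dd ^ 2) by (apply pow_lt; auto).
    unfold sm in HVs. simpl in HVs, HVm, HVM.
    assert (0 < -(h * (dd * (dd * 1))) * ((sin v2 - sin v1) * (sin v2 - sin v1))).
    { apply Rmult_lt_0_compat; auto. simpl in H0. nra. }
    set (s1 := sin v1) in *. set (s2 := sin v2) in *. clearbody s1 s2. lra. }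
  destruct Hcross as [vc [Hvc1 Hvc2]].
  destruct (Hatt vc Hvc1) as [c Hc].
  set (a := x c).
  assert (Hca : cos a = 0) by (unfold a; rewrite Hc; auto).
  assert (HPc : p c <> 0).
  { intro E. destruct (Hr (x c) (p c) (Hl c)) as [B|B]; [apply B; apply dHnu_cos0; auto|auto]. }
  assert (R1 : forall u, x u = 2 * a - x (2 * c - u) /\ p u = p (2 * c - u)).
  { apply (uniq_nu dd m1 m2 h Hd Hh x p _ _ c Hs (sol_nu_refl dd m1 m2 h x p (2 * c) a Hca Hs)).
    - replace (2 * c - c) with c by ring. unfold a. ring.
    - replace (2 * c - c) with c by ring. auto. }
  destruct (MVT_cor2 x p c (c + Tn) ltac:(lra) (fun u _ => Hdx u)) as [b [Eb Hb]].
  rewrite Hper in Eb. assert (Hpb : p b = 0) by (assert (E0 : p b * Tn = 0) by (rewrite <- (Rminus_diag (x c)), Eb; ring); apply Rmult_integral in E0; destruct E0; [auto|lra]).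
  destruct (first_zero p c b Hcp ltac:(lra) HPc Hpb) as [t1 [Ht1 [Hpt1 Hnz]]].
  set (tau := t1 - c).
  assert (R3 : forall u, x u = x (2 * t1 - u) /\ p u = - p (2 * t1 - u)).
  { apply (uniq_nu dd m1 m2 h Hd Hh x p _ _ t1 Hs (sol_nu_rev dd m1 m2 h x p (2 * t1) Hs)).
    - replace (2 * t1 - t1) with t1 by ring. auto.
    - replace (2 * t1 - t1) with t1 by ring. rewrite Hpt1. ring. }
  assert (Hsgn : forall u, c <= u < t1 -> p c * p u > 0).
  { intros u Hu. destruct (Rlt_dec 0 (p c * p u)); auto. exfalso.
    assert (Hn2 : p u <> 0) by (apply Hnz; lra).
    assert (p c * p u < 0).
    { apply prod_neg; auto. }
    destruct (Rle_lt_or_eq_dec c u ltac:(lra)) as [B|B]; [|subst u; nra].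
    destruct (ivt0 p c u Hcp B H) as [w [Hw1 Hw2]]. apply (Hnz w); auto; lra. }
  assert (Hsg : exists sg : Z, (sg = 1 \/ sg = -1)%Z /\ IZR sg * p c > 0).
  { destruct (nz_cases _ HPc); [exists (-1)%Z|exists 1%Z]; split; auto; simpl; lra. }
  destruct Hsg as [sg [Hsg1 Hsg2]]. set (s := IZR sg) in *.
  assert (Hs2 : s * s = 1) by (unfold s; destruct Hsg1 as [-> | ->]; simpl; lra).
  assert (Hmono : forall u w, c <= u -> u < w -> w <= t1 -> s * x u < s * x w).
  { intros u w H1 H2 H3. destruct (MVT_cor2 x p u w H2 (fun c _ => Hdx c)) as [xi [E Hxi]].
    assert (s * (x w - x u) = s * p xi * (w - u)) by (rewrite E; ring).
    assert (p c * p xi > 0) by (apply Hsgn; lra).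
    assert (s * p xi > 0).
    { assert (s * p c * (p c * p xi) > 0) by nra.
      assert (s * p c * (p c * p xi) = s * p xi * (p c * p c)) by ring.
      assert (0 < p c * p c) by (apply Rsqr_pos_lt in HPc; unfold Rsqr in HPc; lra). nra. }
    nra. }
  set (v1 := x t1).
  assert (Hd1 : 0 < s * (v1 - a)) by (unfold v1, a; assert (A := Hmono c t1 ltac:(lra) ltac:(lra) ltac:(lra)); lra).
  assert (Hd1' : s * (v1 - a) < PI).
  { destruct (Rlt_dec (s * (v1 - a)) PI) as [|Hn]; auto. exfalso. apply Rnot_lt_le in Hn.
    destruct (Rle_lt_or_eq_dec _ _ Hn) as [Hgt|Heq'].
    -
      set (w := v1 - 2 * PI * s).
      assert (Hxl : x (c - tau) = 2 * a - v1).
      { destruct (R1 (c - tau)) as [A _]. rewrite A. unfold v1, tau. f_equal. f_equal. ring. }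
      assert (Hw : Rmin (x (c - tau)) (x (c + tau)) <= w <= Rmax (x (c - tau)) (x (c + tau))).
      { rewrite Hxl. replace (c + tau) with t1 by (unfold tau; ring). fold v1.
        unfold w, Rmin, Rmax. unfold s in *. destruct Hsg1 as [E|E]; rewrite E in *; simpl IZR in *;
        destruct Rle_dec; split; lra. }
      destruct (ivt_val x (c - tau) (c + tau) w Hcx ltac:(unfold tau; lra) Hw) as [ss [Hss1 Hss2]].
      assert (HVw : V w = V v1).
      { unfold V, w. unfold s. replace (v1 - 2 * PI * IZR sg) with (v1 + IZR (- sg) * (2 * PI)) by (rewrite opp_IZR; ring).
        rewrite sinZ. auto. }
      assert (Hpss : p ss = 0).
      { assert (A := HE ss). rewrite Hss2, HVw in A. assert (B := HE t1). rewrite Hpt1 in B. fold v1 in B.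
        apply sq0 with (b := 0). lra. }
      assert (ss <> c - tau).
      { intro E. rewrite E, Hxl in Hss2. unfold w in Hss2. unfold s in *.
        destruct Hsg1 as [E'|E']; rewrite E' in *; simpl IZR in *; lra. }
      assert (ss <> c + tau).
      { intro E. replace (c + tau) with t1 in E by (unfold tau; ring). rewrite E in Hss2. fold v1 in Hss2. unfold w in Hss2.
        unfold s in *. destruct Hsg1 as [E'|E']; rewrite E' in *; simpl IZR in *; lra. }
      destruct (Rle_dec c ss).
      + apply (Hnz ss); auto. split; auto. unfold tau in *. lra.
      + destruct (R1 ss) as [_ B]. rewrite B in Hpss. apply (Hnz (2 * c - ss)); auto. unfold tau in *. lra.
    -
      assert (Hcv : cos v1 = 0).
      { assert (v1 = a + s * PI) by (unfold s in *; destruct Hsg1 as [E|E]; rewrite E in *; simpl IZR in *; lra).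
        rewrite H. unfold s in *. destruct Hsg1 as [E|E]; rewrite E; simpl IZR.
        - rewrite Rmult_1_l, neg_cos, Hca. ring.
        - replace (a + -1 * PI) with ((a + -1 * PI) + PI - PI) by ring.
          assert (cos ((a + -1 * PI) + PI) = - cos (a + -1 * PI)) by apply neg_cos.
          replace (a + -1 * PI + PI) with a in H0 by ring. rewrite Hca in H0.
          replace (a + -1 * PI + PI - PI) with (a + -1 * PI) by ring. lra. }
      destruct (Hr (x t1) (p t1) (Hl t1)) as [B|B]; [apply B; apply dHnu_cos0; auto|auto]. }
  assert (Hin : forall u, 0 < u < 2 * tau -> 0 < s * (x (c + u) - a) < PI).
  { intros u Hu. destruct (Rle_dec u tau).
    - split.
      + assert (A := Hmono c (c + u) ltac:(lra) ltac:(lra) ltac:(unfold tau in *; lra)). unfold a. lra.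
      + destruct (Rle_lt_or_eq_dec _ _ r) as [B|B].
        * assert (A := Hmono (c + u) t1 ltac:(lra) ltac:(unfold tau in *; lra) ltac:(lra)). fold v1 in A. lra.
        * subst u. replace (c + tau) with t1 by (unfold tau; ring). fold v1. lra.
    - destruct (R3 (c + u)) as [A _]. rewrite A.
      replace (2 * t1 - (c + u)) with (c + (2 * tau - u)) by (unfold tau; ring).
      split.
      + assert (B := Hmono c (c + (2 * tau - u)) ltac:(lra) ltac:(lra) ltac:(unfold tau in *; lra)). unfold a. lra.
      + assert (B := Hmono (c + (2 * tau - u)) t1 ltac:(lra) ltac:(unfold tau in *; lra) ltac:(lra)). fold v1 in B. lra. }
  assert (Hneqa : forall u, 0 < u < 2 * tau -> x (c + u) <> a).
  { intros u Hu E. specialize (Hin u Hu). rewrite E in Hin. lra. }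
  assert (Hcosn : forall u, 0 < u < 2 * tau -> cos (x (c + u)) <> 0).
  { intros u Hu. apply (cos0_near a); auto. specialize (Hin u Hu).
    assert (Rabs (x (c + u) - a) = s * (x (c + u) - a)).
    { unfold s in *. destruct Hsg1 as [E|E]; rewrite E in *; simpl IZR in *.
      - rewrite Rabs_right; lra.
      - rewrite Rabs_left; lra. }
    lra. }
  assert (Hanti : forall u, x (u + 2 * tau) = 2 * a - x u /\ p (u + 2 * tau) = - p u).
  { intro u. destruct (R3 (u + 2 * tau)) as [A B]. destruct (R1 u) as [C E].
    replace (2 * t1 - (u + 2 * tau)) with (2 * c - u) in A, B by (unfold tau; ring).
    split; lra. }
  assert (HT4 : Tn = 4 * tau).
  { assert (Tn <= 4 * tau).
    { destruct (Rle_dec Tn (4 * tau)); auto. exfalso. apply Rnot_le_lt in n. apply (HT2 (4 * tau)).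
      - unfold tau in *. lra.
      - intro u. destruct (Hanti u) as [A B]. destruct (Hanti (u + 2 * tau)) as [C E].
        replace (u + 4 * tau) with (u + 2 * tau + 2 * tau) by ring. rewrite C, E, A, B.
        split; [exists 0%Z; simpl; ring|ring]. }
    destruct (Rle_lt_or_eq_dec _ _ H) as [A|A]; auto. exfalso.
    assert (Hxc : x (c + Tn) = a) by (rewrite Hper; auto).
    destruct (Rtotal_order Tn (2 * tau)) as [B|[B|B]].
    - apply (Hneqa Tn); auto.
    - rewrite B in Hpper. specialize (Hpper c). rewrite (proj2 (Hanti c)) in Hpper.
      apply HPc. lra.
    - replace (c + Tn) with ((c + (Tn - 2 * tau)) + 2 * tau) in Hxc by ring.
      rewrite (proj1 (Hanti _)) in Hxc. apply (Hneqa (Tn - 2 * tau)); [unfold tau in *; lra|]. lra. }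
  exists c, (2 * tau), a. split; [unfold tau; lra|]. split; [lra|]. split; auto.
  assert (HcosZ : forall j u, cos (x (u + IZR j * (2 * tau))) = 0 <-> cos (x u) = 0).
  { apply (Zshift (fun u => cos (x u) = 0)). intro u. rewrite (proj1 (Hanti u)), cos_refl by auto.
    split; intro; lra. }
  assert (HxZ : forall j u, x (u + IZR j * (2 * tau)) = a <-> x u = a).
  { apply (Zshift (fun u => x u = a)). intro u. rewrite (proj1 (Hanti u)). split; intro; lra. }
  split; [|split].
  - intro t. split.
    + intro Hct. destruct (floor_dec (2 * tau) (t - c) ltac:(unfold tau; lra)) as [j [r [Hr1 Hr2]]].
      exists j. assert (cos (x (c + r)) = 0).
      { apply (HcosZ j). replace (c + r + IZR j * (2 * tau)) with t by lra. auto. }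
      destruct (Rle_lt_or_eq_dec 0 r ltac:(lra)) as [Hr0|Hr0].
      * exfalso. apply (Hcosn r); [lra|auto].
      * subst r. lra.
    + intros [j ->]. apply HcosZ. fold a. auto.
  - intro j. apply HxZ. reflexivity.
  - exists v1. rewrite <- (Hl t1). rewrite Hpt1. reflexivity.
Qed.

End Osc.

Lemma cosh_inj u v : cosh u = cosh v -> u + v <> 0 -> u = v.
Proof.
  intros E Huv. unfold cosh in E. rewrite !exp_Ropp in E.
  assert (Hu := exp_pos u). assert (Hv := exp_pos v).
  assert (Hp : exp u * exp v <> 1).
  { rewrite <- exp_plus. intro E'. rewrite <- exp_0 in E'. apply exp_inv in E'. auto. }
  assert ((exp u - exp v) * (exp u * exp v - 1) = 0).
  { assert (exp u + / exp u = exp v + / exp v) by lra.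
    apply Rmult_eq_reg_r with (/ (exp u * exp v)).
    - rewrite Rmult_0_l. field_simplify; try lra. field_simplify in H; try lra.
      assert (Hne : exp u * exp v <> 0) by (apply Rmult_integral_contrapositive; lra).
      apply Rmult_eq_reg_r with (exp u * exp v); auto. rewrite Rmult_0_l.
      field_simplify; try lra.
      assert ((exp u ^ 2 + 1) * exp v = (exp v ^ 2 + 1) * exp u).
      { apply Rmult_eq_reg_r with (/ (exp u * exp v)). field_simplify; try lra.
        field_simplify in H; try lra. apply Rinv_neq_0_compat; auto. }
      nra.
    - apply Rinv_neq_0_compat. apply Rmult_integral_contrapositive; lra. }
  apply Rmult_integral in H. destruct H.
  - apply exp_inv. lra.
  - exfalso. apply Hp. lra.
Qed.

Section LZ.
Variables (dd m1 m2 h g : R).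
Hypotheses (Hd : 0 < dd) (Hm1 : 0 < m1) (Hm2 : 0 < m2) (Hh : h < 0).

Lemma lam_has_zero x p Tl : sol_lam dd m1 m2 h x p -> lev_lam dd m1 m2 h g x p ->
  regular_value (H_lam dd m1 m2 h) (dH_lam dd m1 m2 h) (- g) ->
  min_period (lam_per x p) Tl -> (exists v, H_nu dd m1 m2 h v 0 = g) ->
  exists t, x t = 0.
Proof.
  intros Hs Hl Hr [HT0 [HT1 HT2]] [v Hv].
  assert (Hdx : forall t, dl x t (p t)) by (intro t; apply (Hs t)).
  assert (Hcx : forall t, continuity_pt x t) by (intro t; apply (dl_cont _ _ _ (Hdx t))).
  set (A := dd * (m1 + m2)). set (B := - h * dd ^ 2).
  assert (Hdd2 : 0 < dd ^ 2) by (apply pow_lt; auto).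
  assert (HB : 0 < B) by (unfold B; nra).
  assert (HA : 0 < A) by (unfold A; nra).
  assert (Hlev : forall t, p t * p t / 2 - A * cosh (x t) + B * (cosh (x t) * cosh (x t)) = - g).
  { intro t. rewrite <- (Hl t). unfold H_lam, A, B. simpl. field. }
  assert (HU0 : B - A < - g).
  { destruct (Rle_dec A (2 * B)).
    - set (c := cosh (x 0)). assert (Hc := cosh_ge1 (x 0)). fold c in Hc.
      assert (L0 := Hlev 0). fold c in L0.
      assert (0 <= p 0 * p 0) by apply Rle_0_sqr.
      assert (0 <= (c - 1) * (B * (c + 1) - A)) by (apply Rmult_le_pos; nra).
      assert (B * (c * c) - A * c >= B - A) by nra.
      destruct (Rle_lt_or_eq_dec (B - A) (- g) ltac:(lra)) as [E|E]; auto. exfalso.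
      destruct (Hr 0 0) as [F|F].
      + unfold H_lam. rewrite cosh_0. rewrite <- E. unfold A, B. simpl. field.
      + apply F. unfold dH_lam. rewrite sinh_0. ring.
      + apply F. auto.
    - apply Rnot_le_lt in n. unfold H_nu in Hv. simpl in Hv. assert (HBd : B = - h * dd ^ 2) by reflexivity. assert (HAd : A = dd * (m1 + m2)) by reflexivity. clearbody A B.
      set (s := sin v) in *. set (am := dd * (m1 - m2)) in *.
      assert (Hs1 : -1 <= s <= 1) by apply SIN_bound.
      assert (Ham : Rabs am < A).
      { unfold am. rewrite HAd. rewrite Rabs_mult, Rabs_right by lra. apply Rmult_lt_compat_l; auto.
        apply Rabs_def1; lra. }
      assert (Hams : am * s <= Rabs am * Rabs s).
      { rewrite <- Rabs_mult. apply Rle_abs. }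
      assert (Hss : s * s = Rabs s * Rabs s) by (rewrite <- Rabs_mult; rewrite Rabs_right; [auto|apply Rle_ge, Rle_0_sqr]).
      assert (Hus : 0 <= Rabs s <= 1) by (split; [apply Rabs_pos|apply Rabs_le; lra]).
      set (u := Rabs s) in *. set (aa := Rabs am) in *. clearbody u aa.
      assert (Hg : g = am * s - B * (s * s)) by (rewrite <- Hv; rewrite HBd; simpl; field).
      assert (am * s - B * (s * s) < A - B).
      { rewrite Hss. destruct (Rle_lt_or_eq_dec 0 u ltac:(lra)) as [Hu|Hu].
        - assert (0 < (A - aa) * u) by (apply Rmult_lt_0_compat; lra).
          assert (0 <= (1 - u) * (A - B * (1 + u))) by (apply Rmult_le_pos; nra).
          assert (aa * u <= aa * u) by lra. nra.
        - subst u. nra. }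
      lra. }
  destruct (Classical_Prop.classic (exists t, x t = 0)) as [Hz|Hz]; auto. exfalso.
  assert (Hnz : forall t, x t <> 0) by (intros t E; apply Hz; eauto).
  assert (Hper : forall t, x (t + Tl) = x t) by (intro t; apply (HT1 t)).
  destruct (periodic_max x Tl HT0 Hcx Hper) as [tM HtM].
  destruct (periodic_min x Tl HT0 Hcx Hper) as [tm Htm].
  assert (HpM : p tM = 0) by (apply (deriv_at_max x _ tM (Hdx tM) HtM)).
  assert (Hpm : p tm = 0) by (apply (deriv_at_min x _ tm (Hdx tm) Htm)).
  assert (Hlt : x tm < x tM).
  { destruct (Rle_lt_or_eq_dec _ _ (Htm tM)) as [E|E]; auto. exfalso.
    assert (Hconst : forall t, x t = x tm) by (intro t; specialize (HtM t); specialize (Htm t); lra).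
    assert (Hp0 : forall t, p t = 0) by (intro t; apply (const_fun_deriv x (x tm) t); auto).
    assert (HF : Flam dd m1 m2 h (x 0) = 0).
    { apply (const_fun_deriv p 0 0); auto. apply (Hs 0). }
    destruct (Hr (x 0) (p 0) (Hl 0)) as [F|F].
    - apply F. unfold Flam in HF. lra.
    - apply F. auto. }
  assert (Hsum : x tm + x tM <> 0).
  { destruct (const_sign x Hcx Hnz) as [P|P]; specialize (P tm) as P1; specialize (P tM) as P2; lra. }
  assert (Hc12 : cosh (x tm) <> cosh (x tM)).
  { intro E. apply cosh_inj in E; auto. lra. }
  set (c1 := cosh (x tm)) in *. set (c2 := cosh (x tM)) in *.
  assert (L1 := Hlev tm). assert (L2 := Hlev tM). rewrite Hpm in L1. rewrite HpM in L2. fold c1 in L1. fold c2 in L2.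
  assert (H1 := cosh_ge1 (x tm)). assert (H2 := cosh_ge1 (x tM)). fold c1 in H1. fold c2 in H2.
  assert (E12 : (c1 - c2) * (B * (c1 + c2) - A) = 0) by nra.
  apply Rmult_integral in E12. destruct E12 as [E|E]; [apply Hc12; lra|].
  clearbody A B c1 c2.
  assert (HAe : A = B * (c1 + c2)) by lra. subst A.
  assert (K1 : (c1 - 1) * (B * (c1 + 1) - B * (c1 + c2)) > 0) by nra.
  assert (K2 : 0 <= (c1 - 1) * (c2 - 1) * B) by (apply Rmult_le_pos; [apply Rmult_le_pos|]; lra).
  nra.
Qed.

End LZ.

Lemma per_multiple (per : R -> Prop) T0 : min_period per T0 ->
  (forall a b, per a -> per b -> per (a - b)) ->
  forall P, 0 < P -> per P -> exists n : nat, (1 <= n)%nat /\ P = INR n * T0.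
Proof.
  intros [H0 [H1 H2]] Hsub P HP Hper.
  assert (Hz : per 0) by (replace 0 with (T0 - T0) by ring; auto).
  assert (Hadd : forall a b, per a -> per b -> per (a + b)).
  { intros a b A B. replace (a + b) with (a - (0 - b)) by ring. apply Hsub; auto. }
  assert (Hmul : forall n : nat, per (INR n * T0)).
  { induction n. simpl. rewrite Rmult_0_l. auto. rewrite S_INR. replace ((INR n + 1) * T0) with (INR n * T0 + T0) by ring. auto. }
  destruct (base_Int_part (P / T0)) as [B1 B2].
  assert (Hpos : (0 <= Int_part (P / T0))%Z).
  { assert (-1 < IZR (Int_part (P / T0))).
    { assert (0 < P / T0) by (apply Rdiv_lt_0_compat; auto). lra. }
    apply lt_IZR in H. lia. }
  set (n := Z.to_nat (Int_part (P / T0))).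
  assert (Hn : INR n = IZR (Int_part (P / T0))) by (unfold n; rewrite INR_IZR_INZ, Z2Nat.id; auto).
  set (r := P - INR n * T0).
  assert (HPT : P = (P / T0) * T0) by (field; lra).
  assert (Hr : 0 <= r < T0) by (unfold r; rewrite Hn; split; nra).
  assert (per r) by (apply Hsub; auto).
  destruct (Rle_lt_or_eq_dec 0 r ltac:(lra)) as [A|A].
  - exfalso. apply (H2 r); [lra|auto].
  - exists n. split.
    + destruct n; [|lia]. exfalso. simpl in r. unfold r in A. lra.
    + unfold r in A. lra.
Qed.

Lemma lam_per_sub x p a b : lam_per x p a -> lam_per x p b -> lam_per x p (a - b).
Proof.
  intros A B t. destruct (B (t + (a - b))) as [B1 B2]. replace (t + (a - b) + b) with (t + a) in B1, B2 by ring.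
  destruct (A t). split; congruence.
Qed.

Lemma eqmod_trans a b c : eqmod2pi a b -> eqmod2pi b c -> eqmod2pi a c.
Proof. intros [k1 ->] [k2 ->]. exists (k2 + k1)%Z. rewrite plus_IZR. ring. Qed.
Lemma eqmod_sym a b : eqmod2pi a b -> eqmod2pi b a.
Proof. intros [k ->]. exists (- k)%Z. rewrite opp_IZR. ring. Qed.

Lemma nu_per_sub x p a b : nu_per x p a -> nu_per x p b -> nu_per x p (a - b).
Proof.
  intros A B t. destruct (B (t + (a - b))) as [B1 B2]. replace (t + (a - b) + b) with (t + a) in B1, B2 by ring.
  destruct (A t) as [A1 A2]. split.
  - apply eqmod_trans with (x (t + a)); [apply eqmod_sym; auto|auto].
  - congruence.
Qed.

Lemma period_rel lam plam nu pnu T Tl Tn (p q : nat) :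
  min_period (state_per lam plam nu pnu) T -> min_period (lam_per lam plam) Tl ->
  min_period (nu_per nu pnu) Tn -> (0 < p)%nat -> (0 < q)%nat -> Nat.gcd p q = 1%nat ->
  Tn / Tl = INR p / INR q -> T = INR q * Tn /\ T = INR p * Tl.
Proof.
  intros HT HTl HTn Hp Hq Hpq HW.
  destruct HT as [T0 [T1 T2]]. pose proof HTl as HTl'. pose proof HTn as HTn'.
  destruct HTl' as [Tl0 [Tl1 Tl2]]. destruct HTn' as [Tn0 [Tn1 Tn2]].
  assert (Hq' : 0 < INR q) by (apply lt_0_INR; lia). assert (Hp' : 0 < INR p) by (apply lt_0_INR; lia).
  assert (HqTn : INR q * Tn = INR p * Tl).
  { assert (Tn = INR p / INR q * Tl) by (rewrite <- HW; field; lra). rewrite H. field. lra. }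
  assert (HlT : lam_per lam plam T) by (intro t; destruct (T1 t) as [A [B _]]; auto).
  assert (HnT : nu_per nu pnu T) by (intro t; destruct (T1 t) as [_ [_ [C E]]]; auto).
  destruct (per_multiple _ Tl HTl (lam_per_sub lam plam) T T0 HlT) as [a [Ha1 Ha2]].
  destruct (per_multiple _ Tn HTn (nu_per_sub nu pnu) T T0 HnT) as [b [Hb1 Hb2]].
  assert (Hmul_l : forall n : nat, lam_per lam plam (INR n * Tl)).
  { induction n. intro t. simpl. rewrite Rmult_0_l, Rplus_0_r. auto.
    rewrite S_INR. replace ((INR n + 1) * Tl) with (INR n * Tl - (0 - Tl)) by ring.
    apply lam_per_sub; auto. replace (0 - Tl) with (Tl - Tl - Tl) by ring.
    apply lam_per_sub; auto. apply lam_per_sub; auto. }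
  assert (Hmul_n : forall n : nat, nu_per nu pnu (INR n * Tn)).
  { induction n. intro t. simpl. rewrite Rmult_0_l, Rplus_0_r. split; auto. exists 0%Z. simpl. ring.
    rewrite S_INR. replace ((INR n + 1) * Tn) with (INR n * Tn - (0 - Tn)) by ring.
    apply nu_per_sub; auto. replace (0 - Tn) with (Tn - Tn - Tn) by ring.
    apply nu_per_sub; auto. apply nu_per_sub; auto. }
  assert (Hle : T <= INR q * Tn).
  { destruct (Rle_dec T (INR q * Tn)) as [|Hn]; auto. exfalso. apply Rnot_le_lt in Hn.
    apply (T2 (INR q * Tn)). split; auto. apply Rmult_lt_0_compat; auto.
    intro t. destruct (Hmul_n q t) as [A B]. destruct (Hmul_l p t) as [C E].
    rewrite <- HqTn in C, E. repeat split; auto. }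
  assert (Hbpaq : (b * p = a * q)%nat).
  { apply INR_eq. rewrite !mult_INR.
    assert (INR b * Tn = INR a * Tl) by lra.
    assert (Tn = INR p / INR q * Tl) by (rewrite <- HW; field; lra).
    rewrite H0 in H. apply Rmult_eq_reg_r with (Tl / INR q). 2: { apply Rgt_not_eq. apply Rdiv_lt_0_compat; lra. }
    replace (INR b * INR p * (Tl / INR q)) with (INR b * (INR p / INR q * Tl)) by (field; lra).
    rewrite H. field. lra. }
  assert (Hdiv : Nat.divide q b).
  { apply (Nat.gauss q p b). exists a. lia. rewrite Nat.gcd_comm. auto. }
  destruct Hdiv as [z Hz]. assert (1 <= z)%nat by (destruct z; lia).
  assert (INR q * Tn <= T).
  { rewrite Hb2, Hz, mult_INR. assert (1 <= INR z) by (apply (le_INR 1); auto). nra. }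
  split; lra.
Qed.

Definition RL (a b : R * nat) := fst a < fst b.

Lemma SS_app l1 l2 : StronglySorted RL l1 -> StronglySorted RL l2 ->
  (forall x y, In x l1 -> In y l2 -> RL x y) -> StronglySorted RL (l1 ++ l2).
Proof.
  induction l1 as [|a l1 IH]; simpl; auto. intros H1 H2 H3. inversion H1; subst.
  constructor.
  - apply IH; auto.
  - apply Forall_app; split; auto. apply Forall_forall. intros; apply H3; auto.
Qed.

Lemma SS_app_inv l1 l2 : StronglySorted RL (l1 ++ l2) ->
  StronglySorted RL l1 /\ StronglySorted RL l2 /\ (forall x y, In x l1 -> In y l2 -> RL x y).
Proof.
  induction l1 as [|a l1 IH]; simpl; intros H.
  - split; [constructor|split; auto]. intros; contradiction.
  - inversion H; subst. destruct (IH H2) as [A [B C]]. apply Forall_app in H3. destruct H3 as [F1 F2].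
    split; [constructor; auto|split; auto].
    intros x y [E|E] Hy; [subst; rewrite Forall_forall in F2; auto|auto].
Qed.

Lemma SS_nth l : StronglySorted RL l -> forall i, (S i < length l)%nat ->
  nth i (map fst l) 0 < nth (S i) (map fst l) 0.
Proof.
  induction l as [|a l IH]; simpl; intros H i Hi; [lia|]. inversion H; subst. destruct i.
  - destruct l as [|r l]; simpl in *; [lia|]. inversion H3; subst. auto.
  - apply IH; auto. lia.
Qed.

Lemma split_sorted T Lw : StronglySorted RL Lw -> exists A B, Lw = A ++ B /\
  (forall x, In x A -> fst x < T) /\ (forall x, In x B -> T <= fst x).
Proof.
  induction Lw as [|a l IH]; intros H.
  - exists nil, nil. simpl. repeat split; intros; contradiction.
  - inversion H; subst. destruct (Rlt_dec (fst a) T).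
    + destruct (IH H2) as [A [B [E [HA HB]]]]. exists (a :: A), B. subst. repeat split; auto.
      intros x [<-|Hx]; auto.
    + exists nil, (a :: l). repeat split; auto. intros; contradiction.
      intros x [<-|Hx]; [lra|]. rewrite Forall_forall in H3. specialize (H3 x Hx). unfold RL in H3. lra.
Qed.

Lemma rotate_app {A : Type} (l1 l2 : list A) : rotate (length l1) (l1 ++ l2) = l2 ++ l1.
Proof.
  unfold rotate. rewrite skipn_app, firstn_app, Nat.sub_diag, skipn_all, firstn_all. simpl.
  rewrite app_nil_r. reflexivity.
Qed.

Lemma window_word lam nu T c0 (Lw : list (R * nat)) :
  0 < T -> 0 <= c0 <= T ->
  (forall t, lam (t + T) = lam t /\ sin (nu (t + T)) = sin (nu t) /\ cos (nu (t + T)) = cos (nu t)) ->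
  StronglySorted RL Lw ->
  (forall x, In x Lw -> c0 <= fst x < c0 + T) ->
  (forall t, c0 <= t < c0 + T -> is_syzygy lam nu t -> exists s, In (t, s) Lw) ->
  (forall x, In x Lw -> syz_symbol lam nu (fst x) (snd x)) ->
  exists w k, syzygy_word lam nu T w /\ rotate k w = map snd Lw.
Proof.
  intros HT Hc0 Hper HS Hin Hcomp Hsym.
  destruct (split_sorted T Lw HS) as [A [B [E [HA HB]]]].
  subst Lw. destruct (SS_app_inv _ _ HS) as [SA [SB SAB]].
  set (sh := fun x : R * nat => (fst x - T, snd x)).
  set (L' := map sh B ++ A).
  assert (HSL : StronglySorted RL L').
  { apply SS_app; auto.
    - clear -SB. induction B as [|b B IH]; simpl; constructor.
      + inversion SB; auto.
      + inversion SB; subst. rewrite Forall_forall in *. intros x Hx. apply in_map_iff in Hx.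
        destruct Hx as [y [<- Hy]]. specialize (H2 y Hy). unfold RL, sh in *. simpl. lra.
    - intros x y Hx Hy. apply in_map_iff in Hx. destruct Hx as [z [<- Hz]].
      assert (A1 := Hin z ltac:(apply in_or_app; right; auto)).
      assert (A2 := Hin y ltac:(apply in_or_app; left; auto)).
      unfold RL, sh. simpl. lra. }
  assert (Hper' : forall t, lam (t - T) = lam t /\ sin (nu (t - T)) = sin (nu t) /\ cos (nu (t - T)) = cos (nu t)).
  { intro t. destruct (Hper (t - T)) as [P1 [P2 P3]]. replace (t - T + T) with t in * by ring. auto. }
  assert (HsymL : forall x, In x L' -> syz_symbol lam nu (fst x) (snd x)).
  { intros x Hx. apply in_app_or in Hx. destruct Hx as [Hx|Hx].
    - apply in_map_iff in Hx. destruct Hx as [z [<- Hz]].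
      assert (S := Hsym z ltac:(apply in_or_app; right; auto)). unfold sh; simpl.
      destruct (Hper' (fst z)) as [P1 [P2 P3]]. unfold syz_symbol in *. rewrite P1, P2, P3. auto.
    - apply Hsym. apply in_or_app; left; auto. }
  exists (map snd L'), (length (map snd (map sh B))). split.
  - exists (map fst L'). split; [|split; [|split; [|split]]].
    + rewrite !length_map. auto.
    + intros i Hi. rewrite length_map in Hi. apply SS_nth; auto.
    + intros tt Ht. apply in_map_iff in Ht. destruct Ht as [x [<- Hx]]. apply in_app_or in Hx.
      destruct Hx as [Hx|Hx].
      * apply in_map_iff in Hx. destruct Hx as [z [<- Hz]].
        assert (A1 := Hin z ltac:(apply in_or_app; right; auto)). specialize (HB z Hz). unfold sh; simpl. lra.
      * assert (A1 := Hin x ltac:(apply in_or_app; left; auto)). specialize (HA x Hx). lra.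
    + intros tt Ht Hsy. apply in_map_iff. destruct (Rle_dec c0 tt).
      * destruct (Hcomp tt ltac:(lra) Hsy) as [s Hs]. apply in_app_or in Hs. destruct Hs as [Hs|Hs].
        -- exists (tt, s). split; auto. apply in_or_app; right; auto.
        -- specialize (HB _ Hs). simpl in HB. lra.
      * assert (Hsy' : is_syzygy lam nu (tt + T)).
        { destruct (Hper tt) as [P1 [P2 P3]]. unfold is_syzygy in *. rewrite P1, P3. auto. }
        destruct (Hcomp (tt + T) ltac:(lra) Hsy') as [s Hs]. apply in_app_or in Hs. destruct Hs as [Hs|Hs].
        -- specialize (HA _ Hs). simpl in HA. lra.
        -- exists (tt, s). split; auto. apply in_or_app; left. apply in_map_iff. exists (tt + T, s).
           split; auto. unfold sh. simpl. f_equal. ring.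
    + intros i Hi. rewrite length_map in Hi.
      rewrite (nth_indep (map fst L') 0 (fst (0, 0%nat))) by (rewrite length_map; auto).
      rewrite (nth_indep (map snd L') 0%nat (snd (0, 0%nat))) by (rewrite length_map; auto).
      rewrite !map_nth. apply HsymL. apply nth_In. auto.
  - unfold L'. rewrite map_app, rotate_app. rewrite map_app. f_equal. rewrite map_map. reflexivity.
Qed.

Definition blocks (c0 D : R) (sym : nat -> nat) (zl : nat -> list (R * nat)) (N : nat) :=
  concat (map (fun j => (c0 + INR j * D, sym j) :: zl j) (seq 0 N)).

Lemma blocks_S c0 D sym zl N : blocks c0 D sym zl (S N) = blocks c0 D sym zl N ++ ((c0 + INR N * D, sym N) :: zl N).
Proof. unfold blocks. rewrite seq_S, map_app, concat_app. simpl. rewrite app_nil_r. reflexivity. Qed.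

Lemma blocks_props c0 D sym zl N : 0 < D ->
  (forall j, (j < N)%nat -> StronglySorted RL (zl j) /\
     forall x, In x (zl j) -> c0 + INR j * D < fst x < c0 + INR (S j) * D) ->
  StronglySorted RL (blocks c0 D sym zl N) /\
  (forall x, In x (blocks c0 D sym zl N) -> c0 <= fst x < c0 + INR N * D).
Proof.
  intros HD. induction N as [|N IH]; intros Hz.
  - unfold blocks. simpl. split; [constructor|intros; contradiction].
  - destruct IH as [IH1 IH2]. { intros j Hj. apply Hz. lia. }
    destruct (Hz N ltac:(lia)) as [Z1 Z2].
    assert (HN : 0 <= INR N) by apply pos_INR.
    rewrite blocks_S. split.
    + apply SS_app; auto.
      * constructor; auto. apply Forall_forall. intros x Hx. specialize (Z2 x Hx). unfold RL. simpl. lra.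
      * intros x y Hx Hy. specialize (IH2 x Hx). unfold RL. destruct Hy as [<-|Hy]; simpl; [lra|].
        specialize (Z2 y Hy). lra.
    + intros x Hx. rewrite S_INR in *. apply in_app_or in Hx. destruct Hx as [Hx|[<-|Hx]].
      * specialize (IH2 x Hx). nra.
      * simpl. nra.
      * specialize (Z2 x Hx). nra.
Qed.

Lemma in_blocks c0 D sym zl N x : In x (blocks c0 D sym zl N) <->
  exists j, (j < N)%nat /\ (x = (c0 + INR j * D, sym j) \/ In x (zl j)).
Proof.
  unfold blocks. rewrite in_concat. split.
  - intros [l [Hl Hx]]. apply in_map_iff in Hl. destruct Hl as [j [<- Hj]]. apply in_seq in Hj.
    exists j. split; [lia|]. destruct Hx as [<-|Hx]; auto.
  - intros [j [Hj Hx]]. exists ((c0 + INR j * D, sym j) :: zl j). split.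
    + apply in_map_iff. exists j. split; auto. apply in_seq. lia.
    + destruct Hx as [<-|Hx]; [left|right]; auto.
Qed.

Lemma map_snd_blocks c0 D sym zl N :
  map snd (blocks c0 D sym zl N) = concat (map (fun j => sym j :: map snd (zl j)) (seq 0 N)).
Proof. unfold blocks. rewrite concat_map, map_map. reflexivity. Qed.

Lemma length_rotate {A : Type} k (w : list A) : length (rotate k w) = length w.
Proof.
  unfold rotate. rewrite length_app, length_skipn, length_firstn.
  destruct (Nat.le_ge_cases k (length w)); [rewrite Nat.min_l by auto|rewrite Nat.min_r by auto]; lia.
Qed.

Lemma map_nth_seq_eq {A B : Type} (f : A -> B) (l : list A) d :
  map f l = map (fun j => f (nth j l d)) (seq 0 (length l)).
Proof.
  induction l as [|a l IH]; simpl; auto. f_equal. rewrite IH. rewrite <- seq_shift, map_map. reflexivity.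
Qed.

Lemma SS_map_seq (f : nat -> R) a n : (forall i k, (i < k)%nat -> f i < f k) ->
  StronglySorted RL (map (fun i => (f i, 3%nat)) (seq a n)).
Proof.
  intros Hf. revert a. induction n as [|n IH]; intro a; simpl; constructor; auto.
  apply Forall_forall. intros x Hx. apply in_map_iff in Hx. destruct Hx as [k [<- Hk]].
  apply in_seq in Hk. unfold RL; simpl. apply Hf. lia.
Qed.

Definition Fz (W e : R) (j : nat) : Z := Int_part (INR j * W - e).
Definition nz (W e : R) (j : nat) : nat := Z.to_nat (Fz W e (S j) - Fz W e j).
Definition zlz (c0 tau W e : R) (j : nat) : list (R * nat) :=
  map (fun i => (c0 + (e + IZR (Fz W e j + 1 + Z.of_nat i)) * tau, 3%nat)) (seq 0 (nz W e j)).

Section ZS.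
Variables (c0 tau W e : R).
Hypotheses (Htau : 0 < tau) (HW : 0 < W) (He : 0 < e < 1)
  (Hav : forall x y : Z, W * IZR x + - e <> IZR y).

Lemma Fz_lt j : IZR (Fz W e j) < INR j * W - e /\ INR j * W - e < IZR (Fz W e j) + 1.
Proof.
  unfold Fz. destruct (base_Int_part (INR j * W - e)) as [A B]. split; [|lra].
  destruct A as [A|A]; auto. exfalso. apply (Hav (Z.of_nat j) (Int_part (INR j * W - e))).
  rewrite <- INR_IZR_INZ. lra.
Qed.

Lemma Fz_mono j : (Fz W e j <= Fz W e (S j))%Z.
Proof.
  destruct (Fz_lt j) as [A B]. destruct (Fz_lt (S j)) as [C E]. rewrite S_INR in *.
  assert (IZR (Fz W e j) < IZR (Fz W e (S j)) + 1) by nra.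
  rewrite <- plus_IZR in H. apply lt_IZR in H. lia.
Qed.

Lemma zlz_props j : StronglySorted RL (zlz c0 tau W e j) /\
  forall x, In x (zlz c0 tau W e j) -> c0 + INR j * (W * tau) < fst x < c0 + INR (S j) * (W * tau).
Proof.
  split.
  - unfold zlz. apply SS_map_seq. intros i k Hik.
    apply Rplus_lt_compat_l. apply Rmult_lt_compat_r; auto. apply Rplus_lt_compat_l. apply IZR_lt. lia.
  - intros x Hx. unfold zlz in Hx. apply in_map_iff in Hx. destruct Hx as [i [<- Hi]]. apply in_seq in Hi.
    cbn [fst]. destruct (Fz_lt j) as [A B]. destruct (Fz_lt (S j)) as [C E]. unfold nz in Hi.
    assert (Hi' : (Fz W e j + 1 + Z.of_nat i <= Fz W e (S j))%Z) by lia.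
    apply IZR_le in Hi'. rewrite !plus_IZR in *.
    assert (0 <= IZR (Z.of_nat i)) by (apply IZR_le; lia).
    split.
    + assert (INR j * W < e + (IZR (Fz W e j) + 1 + IZR (Z.of_nat i))) by lra.
      replace (INR j * (W * tau)) with ((INR j * W) * tau) by ring. apply Rplus_lt_compat_l.
      apply Rmult_lt_compat_r; auto.
    + assert (e + (IZR (Fz W e j) + 1 + IZR (Z.of_nat i)) < INR (S j) * W) by lra.
      replace (INR (S j) * (W * tau)) with ((INR (S j) * W) * tau) by ring. apply Rplus_lt_compat_l.
      apply Rmult_lt_compat_r; auto.
Qed.

Lemma zlz_complete j (i : Z) : INR j * (W * tau) <= (e + IZR i) * tau < INR (S j) * (W * tau) ->
  In (c0 + (e + IZR i) * tau, 3%nat) (zlz c0 tau W e j).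
Proof.
  intros [H1 H2].
  assert (A1 : INR j * W <= e + IZR i).
  { apply Rmult_le_reg_r with tau; auto. lra. }
  assert (A2 : e + IZR i < INR (S j) * W).
  { apply Rmult_lt_reg_r with tau; auto. lra. }
  destruct (Fz_lt j) as [B1 B2]. destruct (Fz_lt (S j)) as [C1 C2].
  assert (L1 : (Fz W e j < i)%Z) by (apply lt_IZR; lra).
  assert (L2 : (i < Fz W e (S j) + 1)%Z) by (apply lt_IZR; rewrite plus_IZR; lra).
  unfold zlz. apply in_map_iff. exists (Z.to_nat (i - Fz W e j - 1)). split.
  - rewrite Z2Nat.id by lia. replace (Fz W e j + 1 + (i - Fz W e j - 1))%Z with i by ring. reflexivity.
  - apply in_seq. unfold nz. lia.
Qed.

Lemma map_snd_zlz j : map snd (zlz c0 tau W e j) = repeat 3%nat (nz W e j).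
Proof.
  unfold zlz. rewrite map_map. cbn [snd]. rewrite map_const, length_seq. reflexivity.
Qed.

Lemma length_words (sym : nat -> nat) N :
  Z.of_nat (length (concat (map (fun j => sym j :: repeat 3%nat (nz W e j)) (seq 0 N)))) =
  (Z.of_nat N + Fz W e N - Fz W e 0)%Z.
Proof.
  induction N as [|N IH].
  - simpl. lia.
  - rewrite seq_S, map_app, concat_app, length_app. cbn [map concat]. rewrite app_nil_r. cbn [length].
    rewrite repeat_length, Nat2Z.inj_add, IH, Nat2Z.inj_succ. unfold nz.
    rewrite !Nat.add_0_l. rewrite Z2Nat.id by (pose proof (Fz_mono N); lia). rewrite Nat2Z.inj_succ. lia.
Qed.

Lemma sturm_nz : forall i : nat,
  let yprev := - e + INR i * W in
  (frac_part yprev + frac_part W < 1 /\ Z.of_nat (nz W e i) = Int_part W) \/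
  (frac_part yprev + frac_part W > 1 /\ Z.of_nat (nz W e i) = (Int_part W + 1)%Z).
Proof.
  intros i yprev.
  assert (E : Z.of_nat (nz W e i) = (Int_part (yprev + W) - Int_part yprev)%Z).
  { unfold nz, Fz. rewrite Z2Nat.id by (pose proof (Fz_mono i); unfold Fz in *; lia).
    unfold yprev. rewrite S_INR. f_equal; f_equal; ring. }
  rewrite E.
  destruct (Rlt_dec (frac_part yprev + frac_part W) 1) as [A|A].
  - left. split; auto. rewrite plus_Int_part2 by auto. ring.
  - right. assert (frac_part yprev + frac_part W <> 1).
    { intro F. apply (Hav (Z.of_nat (S i)) (Int_part yprev + Int_part W + 1)).
      rewrite <- INR_IZR_INZ. rewrite !plus_IZR, S_INR.
      pose proof (Rplus_Int_part_frac_part yprev). pose proof (Rplus_Int_part_frac_part W).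
      unfold yprev in *. simpl. lra. }
    split; [lra|]. rewrite plus_Int_part1 by lra. ring.
Qed.

End ZS.

Lemma cross_index c0 D N t (j : Z) : 0 < D -> c0 <= t < c0 + INR N * D -> t = c0 + IZR j * D ->
  (0 <= j < Z.of_nat N)%Z.
Proof.
  intros HD Ht ->. rewrite INR_IZR_INZ in Ht.
  assert (0 <= IZR j) by (apply Rmult_le_reg_r with D; lra).
  assert (IZR j < IZR (Z.of_nat N)) by (apply Rmult_lt_reg_r with D; lra).
  apply le_IZR in H. apply lt_IZR in H0. lia.
Qed.

Lemma assemble_LS lam nu T (p q : nat) c0 D tau e (sym : nat -> nat) :
  (0 < p)%nat -> (0 < q)%nat -> 0 < tau -> D = (INR p / INR q) * tau -> T = INR (2 * q) * D ->
  0 <= c0 <= T -> 0 < e < 1 ->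
  (forall t, lam (t + T) = lam t /\ sin (nu (t + T)) = sin (nu t) /\ cos (nu (t + T)) = cos (nu t)) ->
  (forall t, cos (nu t) = 0 <-> exists j : Z, t = c0 + IZR j * D) ->
  (forall t, lam t = 0 <-> exists i : Z, t = c0 + (e + IZR i) * tau) ->
  collision_free lam nu ->
  (forall j, (j < 2 * q)%nat -> (sym j = 1%nat /\ sin (nu (c0 + INR j * D)) = -1) \/
                               (sym j = 2%nat /\ sin (nu (c0 + INR j * D)) = 1)) ->
  exists w k ns, syzygy_word lam nu T w /\ length w = (2 * (p + q))%nat /\ length ns = (2 * q)%nat /\
    rotate k w = concat (map (fun j => block (sym j) (nth j ns 0%nat)) (seq 0 (2 * q))) /\
    sturmian_exponents (INR p / INR q) ns.
Proof.
  intros Hp Hq Htau HD HT Hc0 He Hper Hcross Hzero Hcoll Hsym.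
  set (W := INR p / INR q) in *.
  assert (HW : 0 < W) by (unfold W; apply Rdiv_lt_0_compat; apply lt_0_INR; lia).
  assert (HD0 : 0 < D) by (rewrite HD; apply Rmult_lt_0_compat; auto).
  assert (Hav : forall x y : Z, W * IZR x + - e <> IZR y).
  { intros x y E. apply (Hcoll (c0 + IZR x * D)). split.
    - apply Hzero. exists y. rewrite HD. replace (IZR y) with (W * IZR x + - e) by auto. ring.
    - apply Hcross. exists x. auto. }
  set (N := (2 * q)%nat).
  set (zl := zlz c0 tau W e).
  set (Lw := blocks c0 D sym zl N).
  assert (Hzl : forall j, (j < N)%nat -> StronglySorted RL (zl j) /\
     forall x, In x (zl j) -> c0 + INR j * D < fst x < c0 + INR (S j) * D).
  { intros j _. rewrite HD. apply zlz_props; auto. }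
  destruct (blocks_props c0 D sym zl N HD0 Hzl) as [HS HR].
  fold Lw in HS, HR.
  assert (HTN : T = INR N * D) by auto.
  assert (HT0 : 0 < T) by (rewrite HTN; apply Rmult_lt_0_compat; auto; apply lt_0_INR; unfold N; lia).
  destruct (window_word lam nu T c0 Lw HT0 Hc0 Hper HS) as [w [k [Hw Hrot]]].
  - intros x Hx. rewrite HTN. auto.
  - intros t Ht Hsy. destruct (Classical_Prop.classic (cos (nu t) = 0)) as [Hc|Hc].
    + destruct (proj1 (Hcross t) Hc) as [j Hj].
      assert (Hjr := cross_index c0 D N t j HD0 ltac:(rewrite <- HTN; auto) Hj).
      exists (sym (Z.to_nat j)). unfold Lw. apply in_blocks. exists (Z.to_nat j). split; [lia|].
      left. rewrite Hj. f_equal. f_equal. f_equal. rewrite INR_IZR_INZ, Z2Nat.id by lia. auto.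
    + destruct Hsy as [Hl|Hl]; [|contradiction].
      destruct (proj1 (Hzero t) Hl) as [i Hi].
      destruct (floor_dec D (t - c0) HD0) as [jz [r [Hr Hjz]]].
      assert (Hjr : (0 <= jz < Z.of_nat N)%Z).
      { assert (Ht' : c0 <= t < c0 + INR N * D) by (rewrite <- HTN; auto).
        rewrite INR_IZR_INZ in Ht'.
        assert (IZR (-1) < IZR jz) by (simpl; apply Rmult_lt_reg_r with D; [auto|]; lra).
        assert (IZR jz < IZR (Z.of_nat N)) by (apply Rmult_lt_reg_r with D; [auto|]; lra).
        apply lt_IZR in H. apply lt_IZR in H0. lia. }
      exists 3%nat. unfold Lw. apply in_blocks. exists (Z.to_nat jz). split; [lia|]. right.
      rewrite Hi. unfold zl. apply zlz_complete; auto.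
      rewrite <- HD. rewrite S_INR, INR_IZR_INZ, Z2Nat.id by lia. lra.
  - intros x Hx. unfold Lw in Hx. apply in_blocks in Hx. destruct Hx as [j [Hj [Hx|Hx]]].
    + subst x. simpl.
      assert (Hc : cos (nu (c0 + INR j * D)) = 0).
      { apply Hcross. exists (Z.of_nat j). rewrite <- INR_IZR_INZ. auto. }
      assert (Hl : lam (c0 + INR j * D) <> 0) by (intro E; apply (Hcoll (c0 + INR j * D)); auto).
      unfold syz_symbol. destruct (Hsym j Hj) as [[A B]|[A B]]; right; [left|right]; auto.
    + unfold zl, zlz in Hx. apply in_map_iff in Hx. destruct Hx as [i [<- _]]. simpl.
      set (t := c0 + (e + IZR (Fz W e j + 1 + Z.of_nat i)) * tau).
      assert (Hl : lam t = 0) by (apply Hzero; eexists; reflexivity).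
      assert (Hc : cos (nu t) <> 0) by (intro E; apply (Hcoll t); auto).
      left. auto.
  - exists w, k, (map (nz W e) (seq 0 N)).
    assert (HmapLw : map snd Lw = concat (map (fun j => sym j :: repeat 3%nat (nz W e j)) (seq 0 N))).
    { unfold Lw. rewrite map_snd_blocks. f_equal. apply map_ext. intro j. unfold zl. rewrite map_snd_zlz. auto. }
    split; auto. split; [|split; [|split]].
    + rewrite <- (length_rotate k w), Hrot, HmapLw.
      assert (HZ := length_words W e HW Hav sym N).
      assert (HFN : Fz W e N = (2 * Z.of_nat p - 1)%Z).
      { unfold Fz. symmetry. apply Int_part_spec. unfold N, W.
        rewrite mult_INR, minus_IZR, mult_IZR, <- INR_IZR_INZ. simpl IZR.
        assert (0 < INR q) by (apply lt_0_INR; lia).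
        replace (INR 2 * INR q * (INR p / INR q)) with (2 * INR p) by (simpl; field; lra). lra. }
      assert (HF0 : Fz W e 0 = (-1)%Z).
      { unfold Fz. symmetry. apply Int_part_spec. simpl. lra. }
      rewrite HFN, HF0 in HZ. unfold N in *. lia.
    + rewrite length_map, length_seq. auto.
    + rewrite Hrot, HmapLw. f_equal. apply map_ext_in. intros j Hj. apply in_seq in Hj.
      unfold block. f_equal. f_equal.
      rewrite (nth_indep _ 0%nat (nz W e 0)) by (rewrite length_map, length_seq; lia).
      rewrite map_nth, seq_nth by lia. auto.
    + exists (- e). split.
      * intros x y. apply Hav.
      * intros i Hi. rewrite length_map, length_seq in Hi.
        rewrite (nth_indep _ 0%nat (nz W e 0)) by (rewrite length_map, length_seq; lia).
        rewrite map_nth, seq_nth by lia. simpl.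
        destruct (sturm_nz W e HW Hav i) as [A|A]; [left|right]; auto.
Qed.

Lemma assemble_P lam nu T (q : nat) c0 D (sym : nat -> nat) :
  (0 < q)%nat -> 0 < D -> T = INR (2 * q) * D -> 0 <= c0 <= T ->
  (forall t, lam (t + T) = lam t /\ sin (nu (t + T)) = sin (nu t) /\ cos (nu (t + T)) = cos (nu t)) ->
  (forall t, cos (nu t) = 0 <-> exists j : Z, t = c0 + IZR j * D) ->
  (forall t, lam t <> 0) ->
  (forall j, (j < 2 * q)%nat -> (sym j = 1%nat /\ sin (nu (c0 + INR j * D)) = -1) \/
                               (sym j = 2%nat /\ sin (nu (c0 + INR j * D)) = 1)) ->
  exists w k, syzygy_word lam nu T w /\ rotate k w = concat (map (fun j => sym j :: nil) (seq 0 (2 * q))).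
Proof.
  intros Hq HD0 HT Hc0 Hper Hcross Hnz Hsym.
  set (N := (2 * q)%nat).
  set (zl := fun _ : nat => @nil (R * nat)).
  set (Lw := blocks c0 D sym zl N).
  assert (Hzl : forall j, (j < N)%nat -> StronglySorted RL (zl j) /\
     forall x, In x (zl j) -> c0 + INR j * D < fst x < c0 + INR (S j) * D).
  { intros j _. split; [constructor|intros; contradiction]. }
  destruct (blocks_props c0 D sym zl N HD0 Hzl) as [HS HR].
  fold Lw in HS, HR.
  assert (HTN : T = INR N * D) by auto.
  assert (HT0 : 0 < T) by (rewrite HTN; apply Rmult_lt_0_compat; auto; apply lt_0_INR; unfold N; lia).
  destruct (window_word lam nu T c0 Lw HT0 Hc0 Hper HS) as [w [k [Hw Hrot]]].
  - intros x Hx. rewrite HTN. auto.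
  - intros t Ht Hsy. destruct Hsy as [Hl|Hc]; [exfalso; apply (Hnz t); auto|].
    destruct (proj1 (Hcross t) Hc) as [j Hj].
    assert (Hjr := cross_index c0 D N t j HD0 ltac:(rewrite <- HTN; auto) Hj).
    exists (sym (Z.to_nat j)). unfold Lw. apply in_blocks. exists (Z.to_nat j). split; [lia|].
    left. rewrite Hj. f_equal. f_equal. f_equal. rewrite INR_IZR_INZ, Z2Nat.id by lia. auto.
  - intros x Hx. unfold Lw in Hx. apply in_blocks in Hx. destruct Hx as [j [Hj [Hx|Hx]]]; [|contradiction].
    subst x. simpl.
    assert (Hl : lam (c0 + INR j * D) <> 0) by apply Hnz.
    unfold syz_symbol. destruct (Hsym j Hj) as [[A B]|[A B]]; right; [left|right]; auto.
  - exists w, k. split; auto. rewrite Hrot. unfold Lw. rewrite map_snd_blocks. reflexivity.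
Qed.

Lemma Zn_even n : Z.even (Z.of_nat n) = Nat.even n.
Proof.
  assert (forall m, Z.even (Z.of_nat m) = Nat.even m /\ Z.even (Z.of_nat (S m)) = Nat.even (S m)).
  { intro m; induction m as [|k IH]; [split; reflexivity|]. destruct IH as [A B]. split; auto.
    replace (Z.of_nat (S (S k))) with (Z.of_nat k + 2 * 1)%Z by lia.
    rewrite Z.even_add_mul_2, Nat.even_succ_succ. auto. }
  apply H.
Qed.

Lemma shift_rot (nu : R -> R) c D : 0 < D ->
  (forall t, cos (nu t) = 0 <-> exists j : Z, t = c + IZR j * D) ->
  (forall j : Z, sin (nu (c + IZR j * D)) = if Z.even j then -1 else 1) ->
  exists c0, 0 <= c0 < 2 * D /\
  (forall t, cos (nu t) = 0 <-> exists j : Z, t = c0 + IZR j * D) /\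
  (forall j : Z, sin (nu (c0 + IZR j * D)) = if Z.even j then -1 else 1).
Proof.
  intros HD Hc Hs. destruct (floor_dec (2 * D) c ltac:(lra)) as [m [r [Hr ->]]].
  exists r. split; auto. split.
  - intro t. rewrite Hc. split; intros [j Hj].
    + exists (j + 2 * m)%Z. rewrite Hj, plus_IZR, mult_IZR. simpl. ring.
    + exists (j - 2 * m)%Z. rewrite Hj, minus_IZR, mult_IZR. simpl. ring.
  - intro j. replace (r + IZR j * D) with (r + IZR m * (2 * D) + IZR (j + 2 * (- m)) * D)
      by (rewrite plus_IZR, mult_IZR, opp_IZR; simpl; ring).
    rewrite Hs. rewrite Z.even_add_mul_2. auto.
Qed.

Lemma shift_osc (nu : R -> R) c D a : 0 < D ->
  (forall t, cos (nu t) = 0 <-> exists j : Z, t = c + IZR j * D) ->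
  (forall j : Z, nu (c + IZR j * D) = a) ->
  exists c0, 0 <= c0 < D /\
  (forall t, cos (nu t) = 0 <-> exists j : Z, t = c0 + IZR j * D) /\
  (forall j : Z, nu (c0 + IZR j * D) = a).
Proof.
  intros HD Hc Hs. destruct (floor_dec D c HD) as [m [r [Hr ->]]].
  exists r. split; auto. split.
  - intro t. rewrite Hc. split; intros [j Hj].
    + exists (j + m)%Z. rewrite Hj, plus_IZR. ring.
    + exists (j - m)%Z. rewrite Hj, minus_IZR. ring.
  - intro j. replace (r + IZR j * D) with (r + IZR m * D + IZR (j - m) * D)
      by (rewrite minus_IZR; ring). apply Hs.
Qed.

Lemma zero_shift (lam : R -> R) t1 tau c0 : 0 < tau ->
  (forall t, lam t = 0 <-> exists j : Z, t = t1 + IZR j * tau) -> lam c0 <> 0 ->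
  exists e, 0 < e < 1 /\ forall t, lam t = 0 <-> exists i : Z, t = c0 + (e + IZR i) * tau.
Proof.
  intros Ht Hz Hc. destruct (floor_dec 1 ((t1 - c0) / tau) ltac:(lra)) as [i0 [e [He E]]].
  assert (Et1 : t1 = c0 + (e + IZR i0) * tau).
  { rewrite Rmult_1_r in E. rewrite <- E. field. lra. }
  assert (He0 : e <> 0).
  { intro E0. apply Hc. apply Hz. exists (- i0)%Z. rewrite Et1, E0, opp_IZR. ring. }
  exists e. split; [lra|]. intro t. rewrite Hz. split; intros [j Hj].
  - exists (i0 + j)%Z. rewrite Hj, Et1, plus_IZR. ring.
  - exists (j - i0)%Z. rewrite Hj, Et1, minus_IZR. ring.
Qed.

Lemma P_word_eq q : concat (map (fun j => (if Nat.even j then 1 else 2)%nat :: nil) (seq 0 (2 * q))) = P_word q.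
Proof.
  assert (forall r a, Nat.even a = true ->
    concat (map (fun j => (if Nat.even j then 1 else 2)%nat :: nil) (seq a (2 * r))) = P_word r).
  { intro r; induction r as [|r IH]; intros a Ha; [reflexivity|].
    replace (2 * S r)%nat with (S (S (2 * r))) by lia.
    assert (Hs : Nat.even (S a) = false) by (rewrite Nat.even_succ, <- Nat.negb_even, Ha; reflexivity).
    cbn [seq map concat app]. rewrite Ha, Hs. unfold P_word. cbn [repeat concat app]. f_equal. f_equal.
    apply IH. rewrite Nat.even_succ_succ. auto. }
  apply H. reflexivity.
Qed.

Theorem theorem1
  (d m1 m2 h g : R) (Hd : 0 < d) (Hm1 : 0 < m1) (Hm2 : 0 < m2) (Hh : h < 0)
  (lam plam nu pnu : R -> R)
  (Hsol : is_reg_solution d m1 m2 h lam plam nu pnu)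
  (Hlev_lam : forall tau, H_lam d m1 m2 h (lam tau) (plam tau) = - g)
  (Hlev_nu : forall tau, H_nu d m1 m2 h (nu tau) (pnu tau) = g)
  (Hreg_lam : regular_value (H_lam d m1 m2 h) (dH_lam d m1 m2 h) (- g))
  (Hreg_nu : regular_value (H_nu d m1 m2 h) (dH_nu d m1 m2 h) g)
  (Hnocoll : collision_free lam nu)
  (T : R) (HT : min_period (state_per lam plam nu pnu) T)
  (Tlam Tnu : R)
  (HTlam : min_period (lam_per lam plam) Tlam)
  (HTnu : min_period (nu_per nu pnu) Tnu)
  (p q : nat) (Hp : (0 < p)%nat) (Hq : (0 < q)%nat) (Hpq : Nat.gcd p q = 1%nat)
  (HW : Tnu / Tlam = INR p / INR q) :
  (type_L lam nu Tnu ->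
     exists w, syzygy_word lam nu T w /\ length w = (2 * (p + q))%nat /\
       exists k ns, rotate k w = L_word ns /\ sturmian_exponents (Tnu / Tlam) ns) /\
  (type_S nu Tnu ->
     exists w, syzygy_word lam nu T w /\ length w = (2 * (p + q))%nat /\
       exists k ns, (rotate k w = S_word 1 ns \/ rotate k w = S_word 2 ns) /\
                    sturmian_exponents (Tnu / Tlam) ns) /\
  (type_P lam nu Tnu ->
     exists w, syzygy_word lam nu T w /\ exists k, rotate k w = P_word q).
Proof.
  assert (Hsl : sol_lam d m1 m2 h lam plam) by (intro t; destruct (Hsol t) as [A [B _]]; split; auto).
  assert (Hsn : sol_nu d m1 m2 h nu pnu) by (intro t; destruct (Hsol t) as [_ [_ [C E]]]; split; auto).
  assert (Hll : lev_lam d m1 m2 h g lam plam) by exact Hlev_lam.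
  assert (Hln : lev_nu d m1 m2 h g nu pnu) by exact Hlev_nu.
  destruct (period_rel lam plam nu pnu T Tlam Tnu p q HT HTlam HTnu Hp Hq Hpq HW) as [HTq HTp].
  assert (Hper : forall t, lam (t + T) = lam t /\ sin (nu (t + T)) = sin (nu t) /\ cos (nu (t + T)) = cos (nu t)).
  { intro t. destruct HT as [_ [HT1 _]]. destruct (HT1 t) as [A [_ [C _]]].
    split; auto. split; [apply eqmod_sin|apply eqmod_cos]; auto. }
  pose proof HTlam as [Tl0 _]. pose proof HTnu as [Tn0 _].
  assert (Hqr : 0 < INR q) by (apply lt_0_INR; lia). assert (Hpr : 0 < INR p) by (apply lt_0_INR; lia).
  assert (Hq1 : 1 <= INR q) by (apply (le_INR 1); lia).
  assert (HTnl : Tnu = INR p / INR q * Tlam) by (rewrite <- HW; field; lra).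
  split; [|split].
  -
    intros [HneqL [t1 Ht1]].
    destruct (lam_structure d m1 m2 h g Hd Hm1 Hm2 Hh lam plam Tlam Hsl Hll Hreg_lam HTlam t1 Ht1) as [_ Hz].
    destruct (nu_rot d m1 m2 h Hd Hh nu pnu Tnu Hsn HTnu HneqL) as [c [D [HD [HTn [Hcr Hsn']]]]].
    destruct (shift_rot nu c D HD Hcr Hsn') as [c0 [Hc0 [Hcr0 Hs0]]].
    assert (HDe : D = INR p / INR q * (Tlam / 2)) by (rewrite HTnl in HTn; lra).
    assert (HTD : T = INR (2 * q) * D) by (rewrite mult_INR, HTq, HTn; simpl; ring).
    assert (Hc0T : 0 <= c0 <= T) by (rewrite HTq, HTn; split; [lra|nra]).
    assert (Hlc0 : lam c0 <> 0).
    { intro E. apply (Hnocoll c0). split; auto. apply Hcr0. exists 0%Z. ring. }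
    destruct (zero_shift lam t1 (Tlam / 2) c0 ltac:(lra) Hz Hlc0) as [e [He Hz0]].
    destruct (assemble_LS lam nu T p q c0 D (Tlam / 2) e (fun j => if Nat.even j then 1%nat else 2%nat)
      Hp Hq ltac:(lra) HDe HTD Hc0T
      He Hper Hcr0 Hz0 Hnocoll) as [w [k [ns [Hw [Hlw [Hlns [Hrot Hst]]]]]]].
    { intros j Hj. rewrite INR_IZR_INZ, Hs0, Zn_even. destruct (Nat.even j); auto. }
    exists w. split; auto. split; auto. exists k, ns. split.
    + unfold L_word. rewrite Hlns. exact Hrot.
    + rewrite HW. exact Hst.
  -
    intros HS.
    destruct (nu_osc d m1 m2 h g Hd Hh nu pnu Tnu Hsn Hln Hreg_nu HTnu HS) as [c [D [a [HD [HTn [Ha [Hcr [Hva Hv]]]]]]]].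
    destruct (lam_has_zero d m1 m2 h g Hd Hm1 Hm2 Hh lam plam Tlam Hsl Hll Hreg_lam HTlam Hv) as [t1 Ht1].
    destruct (lam_structure d m1 m2 h g Hd Hm1 Hm2 Hh lam plam Tlam Hsl Hll Hreg_lam HTlam t1 Ht1) as [_ Hz].
    destruct (shift_osc nu c D a HD Hcr Hva) as [c0 [Hc0 [Hcr0 Hs0]]].
    assert (HDe : D = INR p / INR q * (Tlam / 2)) by (rewrite HTnl in HTn; lra).
    assert (HTD : T = INR (2 * q) * D) by (rewrite mult_INR, HTq, HTn; simpl; ring).
    assert (Hc0T : 0 <= c0 <= T) by (rewrite HTq, HTn; split; [lra|nra]).
    assert (Hlc0 : lam c0 <> 0).
    { intro E. apply (Hnocoll c0). split; auto. apply Hcr0. exists 0%Z. ring. }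
    destruct (zero_shift lam t1 (Tlam / 2) c0 ltac:(lra) Hz Hlc0) as [e [He Hz0]].
    assert (Hsa : sin a = -1 \/ sin a = 1).
    { pose proof (sin2 a). unfold Rsqr in H. rewrite Ha in H.
      assert ((sin a + 1) * (sin a - 1) = 0) by lra. apply Rmult_integral in H0. destruct H0; [left|right]; lra. }
    set (sy := if Req_EM_T (sin a) (-1) then 1%nat else 2%nat).
    destruct (assemble_LS lam nu T p q c0 D (Tlam / 2) e (fun _ => sy)
      Hp Hq ltac:(lra) HDe HTD Hc0T
      He Hper Hcr0 Hz0 Hnocoll) as [w [k [ns [Hw [Hlw [Hlns [Hrot Hst]]]]]]].
    { intros j Hj. rewrite INR_IZR_INZ, Hs0. unfold sy. destruct (Req_EM_T (sin a) (-1)).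
      - left; auto.
      - right. split; auto. destruct Hsa; [contradiction|auto]. }
    exists w. split; auto. split; auto. exists k, ns. split.
    + unfold sy in Hrot. destruct (Req_EM_T (sin a) (-1)); [left|right]; unfold S_word;
      rewrite (map_nth_seq_eq _ ns 0%nat), Hlns; exact Hrot.
    + rewrite HW. exact Hst.
  -
    intros [HneqP Hnz].
    destruct (nu_rot d m1 m2 h Hd Hh nu pnu Tnu Hsn HTnu HneqP) as [c [D [HD [HTn [Hcr Hsn']]]]].
    destruct (shift_rot nu c D HD Hcr Hsn') as [c0 [Hc0 [Hcr0 Hs0]]].
    assert (HDe : D = INR p / INR q * (Tlam / 2)) by (rewrite HTnl in HTn; lra).
    assert (HTD : T = INR (2 * q) * D) by (rewrite mult_INR, HTq, HTn; simpl; ring).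
    assert (Hc0T : 0 <= c0 <= T) by (rewrite HTq, HTn; split; [lra|nra]).
    destruct (assemble_P lam nu T q c0 D (fun j => if Nat.even j then 1%nat else 2%nat)
      Hq HD HTD Hc0T Hper Hcr0 Hnz) as [w [k [Hw Hrot]]].
    { intros j Hj. rewrite INR_IZR_INZ, Hs0, Zn_even. destruct (Nat.even j); auto. }
    exists w. split; auto. exists k. rewrite Hrot. apply P_word_eq.
Qed.
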